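(* In the balanced case $\beta_0=C$ with $A>0$ (any sign of $\Delta$), locally uniformly in $\theta\in\mathbb{R}$, \[ \frac1n\log\frac{P_n(e^\theta)}{P_n(1)}\longrightarrow F(\theta)=\log\frac{\tau(1)}{\tau(e^\theta)}\qquad (n\to\infty). \]
   Context: Weighted Motzkin model: fix nonnegative integers $a,b,c,\alpha_0,\beta_0,\gamma_0$, $\alpha_k=ak+\alpha_0$, $\beta_k=bk+\beta_0$, $\gamma_k=ck+\gamma_0$; $w_{0,0}=1$, $w_{n,k}=0$ for $k<0$ or $k>n$, $w_{n+1,k}=\alpha_{k-1}w_{n,k-1}+\gamma_k w_{n,k}+\beta_k w_{n,k+1}$. $A=a$, $B=c$, $C=b$, $\Delta=B^2-4AC$; balanced means $\beta_0=C$. $P_n(x)=\sum_k w_{n,k}x^k$. The singular time $\tau(x)$ (for $x>0$) is: $\frac{1}{A(r_2-r_1)}\log\frac{x-r_1}{x-r_2}$ for $\Delta>0$ ($r_{1,2}=\frac{-B\pm\sqrt\Delta}{2A}$, $r_1<r_2$); $\frac{1}{A(x-r)}$ for $\Delta=0$ ($r=-B/(2A)$); $\frac{\pi/2-\arctan((x-p)/q)}{Aq}$ for $\Delta<0$ ($p=-B/(2A)$, $q=\sqrt{-\Delta}/(2A)$). *)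

(* Defs.v *)
From Stdlib Require Import Reals Lra Lia.
Open Scope R_scope.

(* Weighted Motzkin numbers w_{n,k} with alpha_k = a k + alpha0,
   beta_k = b k + beta0, gamma_k = c k + gamma0 (all nonnegative integers).
   w_{n,k} = 0 for k < 0 is built in (k : nat; the k = 0 case has no
   alpha-term), and w_{n,k} = 0 for k > n follows from w_{0,k} = 0 for k > 0. *)
Fixpoint wM (a b c al0 be0 ga0 : nat) (n k : nat) : nat :=
  match n with
  | O => match k with O => 1%nat | S _ => 0%nat end
  | S m =>
      (match k with
       | O => 0%nat
       | S j => ((a * j + al0) * wM a b c al0 be0 ga0 m j)%nat
       end
       + (c * k + ga0) * wM a b c al0 be0 ga0 m k
       + (b * k + be0) * wM a b c al0 be0 ga0 m (S k))%nat
  end.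

Definition Pn (a b c al0 be0 ga0 : nat) (n : nat) (x : R) : R :=
  sum_f_R0 (fun k => INR (wM a b c al0 be0 ga0 n k) * x ^ k) n.

Definition tau (A B C : R) (x : R) : R :=
  let D := B ^ 2 - 4 * A * C in
  if Rlt_dec 0 D then
    let r1 := (- B - sqrt D) / (2 * A) in
    let r2 := (- B + sqrt D) / (2 * A) in
    / (A * (r2 - r1)) * ln ((x - r1) / (x - r2))
  else if Req_EM_T D 0 then
    let r := - B / (2 * A) in
    / (A * (x - r))
  else
    let p := - B / (2 * A) in
    let q := sqrt (- D) / (2 * A) in
    (PI / 2 - atan ((x - p) / q)) / (A * q).

(* Main.v *)
Require Import Defs.
From Stdlib Require Import Reals Lra Lia ZArith.
From Coquelicot Require Import Coquelicot.
Open Scope R_scope.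


Lemma sum_ext_zero (f : nat -> R) (n N : nat) :
  (forall k, (n < k)%nat -> f k = 0) -> (n <= N)%nat ->
  sum_f_R0 f N = sum_f_R0 f n.
Proof.
  intros Hf HN. induction HN as [|N HN IH]; auto.
  rewrite tech5, IH, Hf; [ring|lia].
Qed.

Lemma sum_shift (f : nat -> R) (n : nat) :
  sum_f_R0 f (S n) = f 0%nat + sum_f_R0 (fun i => f (S i)) n.
Proof. rewrite decomp_sum; [reflexivity|lia]. Qed.

Lemma sum_le_gen (f g : nat -> R) (n : nat) :
  (forall k, (k <= n)%nat -> f k <= g k) -> sum_f_R0 f n <= sum_f_R0 g n.
Proof.
  induction n; intros H; simpl.
  - apply H; lia.
  - apply Rplus_le_compat; [apply IHn; intros; apply H; lia| apply H; lia].
Qed.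

Lemma sum_nonneg (f : nat -> R) (n : nat) :
  (forall k, (k <= n)%nat -> 0 <= f k) -> 0 <= sum_f_R0 f n.
Proof.
  intros H. apply Rle_trans with (sum_f_R0 (fun _ => 0) n).
  - clear H. induction n; simpl; lra.
  - apply sum_le_gen; auto.
Qed.

Lemma sum_term_le (f : nat -> R) (n k : nat) :
  (forall k, (k <= n)%nat -> 0 <= f k) -> (k <= n)%nat -> f k <= sum_f_R0 f n.
Proof.
  intros H Hk. induction n.
  - replace k with 0%nat by lia. simpl; lra.
  - simpl. destruct (Nat.eq_dec k (S n)).
    + subst. assert (0 <= sum_f_R0 f n) by (apply sum_nonneg; intros; apply H; lia). lra.
    + assert (f k <= sum_f_R0 f n) by (apply IHn; [intros; apply H; lia| lia]).
      assert (0 <= f (S n)) by (apply H; lia). lra.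
Qed.

Section Main.
Variables a b c al0 ga0 : nat.
Hypothesis HA : (0 < a)%nat.
Hypothesis Hal0 : (0 < al0)%nat.

Definition w n k := wM a b c al0 b ga0 n k.
Definition P n y := Pn a b c al0 b ga0 n y.
Definition Q y := INR a * y^2 + INR c * y + INR b.
Definition L y := INR al0 * y + INR ga0.
Definition dP n y := sum_f_R0 (fun k => INR k * INR (w n k) * y^(k-1)) n.

Lemma w_zero : forall n k, (n < k)%nat -> w n k = 0%nat.
Proof.
  unfold w. induction n; intros k Hk.
  - destruct k; [lia|reflexivity].
  - simpl. destruct k as [|j]; [lia|].
    rewrite IHn by lia. rewrite (IHn (S j)) by lia. rewrite (IHn (S (S j))) by lia. lia.
Qed.

Lemma w_diag n : w (S n) (S n) = ((a*n+al0) * w n n)%nat.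
Proof.
  unfold w at 1. simpl. fold (w n n). fold (w n (S n)). fold (w n (S (S n))).
  rewrite (w_zero n (S n)), (w_zero n (S (S n))) by lia. lia.
Qed.

Lemma P_eq n y : P n y = sum_f_R0 (fun k => INR (w n k) * y^k) n.
Proof. reflexivity. Qed.

Lemma P_ext n N y : (n <= N)%nat -> P n y = sum_f_R0 (fun k => INR (w n k) * y^k) N.
Proof.
  intros H. rewrite P_eq. symmetry. apply sum_ext_zero; auto.
  intros k Hk. rewrite w_zero by lia. simpl; ring.
Qed.

Lemma dP_ext n N y : (n <= N)%nat -> dP n y = sum_f_R0 (fun k => INR k * INR (w n k) * y^(k-1)) N.
Proof.
  intros H. unfold dP. symmetry. apply sum_ext_zero; auto.
  intros k Hk. rewrite w_zero by lia. simpl; ring.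
Qed.

Lemma P_rec n y : P (S n) y = Q y * dP n y + L y * P n y.
Proof.
  rewrite P_eq.
  assert (Hsplit : forall k, INR (w (S n) k) * y^k =
     (match k with O => 0 | S j => INR (a*j+al0) * INR (w n j) * y^(S j) end)
     + (INR c * INR k + INR ga0) * INR (w n k) * y^k
     + INR b * (INR k + 1) * INR (w n (S k)) * y^k).
  { intros k. unfold w at 1. simpl. fold (w n k). fold (w n (S k)).
    destruct k as [|j].
    - fold (w n 0). repeat rewrite ?plus_INR, ?mult_INR. simpl. ring.
    - fold (w n j). repeat rewrite ?plus_INR, ?mult_INR. rewrite !S_INR. simpl. ring. }
  rewrite (sum_eq _ _ _ (fun k _ => Hsplit k)).
  rewrite !sum_plus.
  rewrite sum_shift. 
  rewrite (tech5 (fun k => (INR c * INR k + INR ga0) * INR (w n k) * y ^ k)).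
  rewrite (w_zero n (S n)) by lia.
  unfold Q, L.
  rewrite (dP_ext n (S (S n)) y) by lia.
  rewrite (sum_shift (fun k => INR k * INR (w n k) * y ^ (k - 1)) (S n)).
  set (Sb := sum_f_R0 (fun i => INR (S i) * INR (w n (S i)) * y ^ (S i - 1)) (S n)).
  assert (HB : sum_f_R0 (fun k => INR b * (INR k + 1) * INR (w n (S k)) * y ^ k) (S n) = INR b * Sb).
  { unfold Sb. rewrite scal_sum. apply sum_eq. intros i _.
    rewrite S_INR. replace (S i - 1)%nat with i by lia. ring. }
  rewrite HB. clear HB.
  assert (HA1 : sum_f_R0 (fun i => INR (a * i + al0) * INR (w n i) * y ^ S i) n
     = INR a * y^2 * sum_f_R0 (fun k => INR k * INR (w n k) * y ^ (k - 1)) n + INR al0 * y * P n y).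
  { rewrite P_eq, !scal_sum, <- sum_plus. apply sum_eq. intros i _.
    rewrite plus_INR, mult_INR. destruct i.
    - simpl. ring.
    - replace (S i - 1)%nat with i by lia. simpl. ring. }
  assert (HG : sum_f_R0 (fun k => (INR c * INR k + INR ga0) * INR (w n k) * y ^ k) n
     = INR c * y * sum_f_R0 (fun k => INR k * INR (w n k) * y ^ (k - 1)) n + INR ga0 * P n y).
  { rewrite P_eq, !scal_sum, <- sum_plus. apply sum_eq. intros i _.
    destruct i.
    - simpl. ring.
    - replace (S i - 1)%nat with i by lia. simpl. ring. }
  rewrite HA1, HG.
  assert (HS2 : Sb = dP n y).
  { rewrite (dP_ext n (S (S n)) y) by lia. rewrite sum_shift. unfold Sb. simpl (INR 0). ring. }
  rewrite HS2. unfold dP. simpl (INR 0). ring.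
Qed.


Lemma is_derive_poly (cf : nat -> R) (N : nat) (y : R) :
  is_derive (fun y => sum_f_R0 (fun k => cf k * y^k) N) y
            (sum_f_R0 (fun k => INR k * cf k * y^(k-1)) N).
Proof.
  induction N.
  - simpl. auto_derive; auto. simpl. ring.
  - simpl. apply (is_derive_plus (fun y => sum_f_R0 (fun k => cf k * y^k) N) (fun y => cf (S N) * y^(S N))).
    + exact IHN.
    + auto_derive; auto. replace (S N - 1)%nat with N by lia. rewrite Nat.sub_0_r. ring.
Qed.

Lemma P_derive n y : is_derive (P n) y (dP n y).
Proof.
  unfold P, Pn, dP. apply (is_derive_poly (fun k => INR (w n k)) n y).
Qed.

Lemma P_nonneg n y : 0 <= y -> 0 <= P n y.
Proof.
  intros Hy. rewrite P_eq. apply sum_nonneg. intros k _.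
  apply Rmult_le_pos; [apply pos_INR| apply pow_le; auto].
Qed.

Lemma dP_nonneg n y : 0 <= y -> 0 <= dP n y.
Proof.
  intros Hy. unfold dP. apply sum_nonneg. intros k _.
  apply Rmult_le_pos; [apply Rmult_le_pos; apply pos_INR| apply pow_le; auto].
Qed.

Lemma w_diag_pos n : (0 < w n n)%nat.
Proof.
  induction n. - unfold w; simpl; lia.
  - rewrite w_diag. apply Nat.mul_pos_pos; lia.
Qed.

Lemma P_pos n y : 0 < y -> 0 < P n y.
Proof.
  intros Hy. rewrite P_eq. destruct n.
  - simpl. unfold w; simpl. lra.
  - simpl. rewrite <- (Rplus_0_l 0). apply Rplus_le_lt_compat.
    + apply sum_nonneg. intros k _. apply Rmult_le_pos; [apply pos_INR| apply pow_le; lra].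
    + apply Rmult_lt_0_compat. apply lt_0_INR, w_diag_pos. apply (pow_lt y (S n)); lra.
Qed.

Lemma P_mono n y z : 0 <= y -> y <= z -> P n y <= P n z.
Proof.
  intros Hy Hyz. rewrite !P_eq. apply sum_le_gen. intros k _.
  apply Rmult_le_compat_l; [apply pos_INR|]. apply pow_incr; lra.
Qed.

Lemma dP_mono n y z : 0 <= y -> y <= z -> dP n y <= dP n z.
Proof.
  intros Hy Hyz. unfold dP. apply sum_le_gen. intros k _.
  apply Rmult_le_compat_l; [apply Rmult_le_pos; apply pos_INR|]. apply pow_incr; lra.
Qed.

Lemma pow_bern1 (z d : R) (k : nat) : 0 <= z -> 0 <= d ->
  z^(S k) + INR (S k) * d * z^k <= (z+d)^(S k).
Proof.
  intros Hz Hd. induction k.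
  - cbn [pow]. rewrite S_INR. simpl (INR 0). lra.
  - rewrite !S_INR in *. cbn [pow] in *.
    assert (0 <= z^k) by (apply pow_le; auto).
    assert (0 <= (z+d) * (z+d)^k) by (apply Rmult_le_pos; [lra| apply pow_le; lra]).
    assert (Hm : (z + d) * (z * z ^ k + (INR k + 1) * d * z ^ k) <= (z + d) * ((z + d) * (z + d) ^ k)).
    { apply Rmult_le_compat_l; lra. }
    assert (0 <= INR k) by apply pos_INR.
    assert (0 <= d * d * z^k * (INR k + 1)) by (repeat apply Rmult_le_pos; lra).
    nra.
Qed.

Lemma pow_bern (z d : R) (k : nat) : 0 <= z -> 0 <= d ->
  z^k + INR k * d * z^(k-1) <= (z+d)^k.
Proof.
  intros Hz Hd. destruct k.
  - simpl; lra.
  - replace (S k - 1)%nat with k by lia. apply pow_bern1; auto.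
Qed.

Lemma dP_convex n z d : 0 <= z -> 0 < d -> d * dP n z <= P n (z + d).
Proof.
  intros Hz Hd. rewrite P_eq. unfold dP. rewrite scal_sum. apply sum_le_gen. intros k _.
  pose proof (pow_bern z d k Hz (Rlt_le _ _ Hd)).
  assert (0 <= z^k) by (apply pow_le; auto).
  assert (0 <= INR (w n k)) by apply pos_INR.
  nra.
Qed.

Lemma dP_ratio n y : 0 < y -> y * dP n y <= INR n * P n y.
Proof.
  intros Hy. rewrite P_eq. unfold dP. rewrite scal_sum, scal_sum.
  apply sum_le_gen. intros k Hk.
  assert (0 <= INR (w n k)) by apply pos_INR.
  assert (0 <= y^k) by (apply pow_le; lra).
  assert (INR k <= INR n) by (apply le_INR; auto).
  destruct k.
  - simpl. pose proof (pos_INR n). nra.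
  - replace (S k - 1)%nat with k by lia. simpl (y ^ S k) in *. assert (0 <= y^k) by (apply pow_le; lra). assert (0 <= INR (w n (S k)) * (y^k * y)) by (apply Rmult_le_pos; [|apply Rmult_le_pos]; lra). nra.
Qed.

Lemma w_diag_lower n : INR a ^ n * INR (Factorial.fact n) <= INR (w (S n) (S n)).
Proof.
  induction n.
  - rewrite w_diag. unfold w; simpl. rewrite Nat.mul_1_r. replace (a*0+al0)%nat with al0 by lia.
    rewrite Rmult_1_l. apply (le_INR 1); lia.
  - rewrite w_diag. rewrite mult_INR, plus_INR, mult_INR, fact_simpl, mult_INR.
    simpl (INR a ^ S n).
    assert (0 <= INR a ^ n * INR (Factorial.fact n)) by (apply Rmult_le_pos; [apply pow_le, pos_INR| apply pos_INR]).
    assert (INR a * INR (S n) <= INR a * INR (S n) + INR al0) by (pose proof (pos_INR al0); lra).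
    apply Rle_trans with (INR a * INR (S n) * (INR a ^ n * INR (Factorial.fact n))); [right; ring|].
    apply Rmult_le_compat; auto. apply Rmult_le_pos; apply pos_INR.
Qed.

Lemma P_lower n y : 0 <= y -> INR a ^ n * INR (Factorial.fact n) * y^(S n) <= P (S n) y.
Proof.
  intros Hy. rewrite P_eq. simpl sum_f_R0 at 1.
  assert (0 <= sum_f_R0 (fun k => INR (w (S n) k) * y ^ k) n).
  { apply sum_nonneg. intros k _. apply Rmult_le_pos; [apply pos_INR| apply pow_le; auto]. }
  assert (0 <= y^(S n)) by (apply pow_le; auto).
  pose proof (w_diag_lower n). simpl (y ^ S n) in *. nra.
Qed.

Lemma Q_pos y : 0 < y -> 0 < Q y.
Proof.
  intros Hy. unfold Q. assert (0 < INR a) by (apply lt_0_INR; lia).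
  pose proof (pos_INR c). pose proof (pos_INR b).
  assert (0 < INR a * y^2) by (apply Rmult_lt_0_compat; auto; apply pow_lt; auto). nra.
Qed.

Lemma L_nonneg y : 0 <= y -> 0 <= L y.
Proof. intros. unfold L. pose proof (pos_INR al0). pose proof (pos_INR ga0). nra. Qed.

Lemma P_ratio n y : 0 < y -> P (S n) y <= INR (S n) * (Q y / y + L y) * P n y.
Proof.
  intros Hy. rewrite P_rec.
  pose proof (dP_ratio n y Hy). pose proof (Q_pos y Hy). pose proof (L_nonneg y (Rlt_le _ _ Hy)).
  pose proof (P_nonneg n y (Rlt_le _ _ Hy)). pose proof (dP_nonneg n y (Rlt_le _ _ Hy)).
  rewrite S_INR. pose proof (pos_INR n).
  assert (dP n y <= INR n * P n y / y) by (apply Rmult_le_reg_l with y; auto; field_simplify; lra).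
  assert (Q y * dP n y <= Q y * (INR n * P n y / y)) by (apply Rmult_le_compat_l; lra).
  assert (Q y * (INR n * P n y / y) = INR n * (Q y / y) * P n y) by (field; lra).
  assert (0 <= Q y / y * P n y) by (apply Rmult_le_pos; [apply Rlt_le, Rdiv_lt_0_compat|]; lra).
  assert (0 <= INR n * L y * P n y) by (apply Rmult_le_pos; [apply Rmult_le_pos|]; lra).
  nra.
Qed.

End Main.


Lemma deriv_mono (f df : R -> R) (x y : R) : x <= y ->
  (forall z, x <= z <= y -> is_derive f z (df z)) ->
  (forall z, x <= z <= y -> 0 <= df z) -> f x <= f y.
Proof.
  intros Hxy Hd Hpos. destruct (Req_dec x y) as [->|Hne]; [lra|].
  destruct (MVT_gen f x y df) as [z [Hz Heq]].
  - intros z Hz. rewrite Rmin_left, Rmax_right in Hz by lra. apply Hd; lra.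
  - intros z Hz. rewrite Rmin_left, Rmax_right in Hz by lra.
    apply continuity_pt_filterlim. apply (ex_derive_continuous (K:=R_AbsRing) (V:=R_NormedModule) f z). exists (df z). apply Hd; lra.
  - rewrite Rmin_left, Rmax_right in Hz by lra.
    assert (0 <= df z * (y - x)) by (apply Rmult_le_pos; [apply Hpos; lra| lra]). lra.
Qed.

Lemma deriv_bound (f df : R -> R) (x y B : R) : x <= y ->
  (forall z, x <= z <= y -> is_derive f z (df z)) ->
  (forall z, x <= z <= y -> df z <= B) -> f y - f x <= B * (y - x).
Proof.
  intros Hxy Hd Hb.
  assert (H := deriv_mono (fun z => B * z - f z) (fun z => B - df z) x y Hxy).
  assert (B * x - f x <= B * y - f y).
  { apply H.
    - intros z Hz. apply (is_derive_minus (fun z => B * z) f). 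
      + auto_derive; auto. ring.
      + apply Hd; auto.
    - intros z Hz. specialize (Hb z Hz). lra. }
  lra.
Qed.

Lemma ln_le_sub1 u : 0 < u -> ln u <= u - 1.
Proof.
  intros Hu. rewrite <- (ln_exp (u - 1)). apply ln_le; auto.
  pose proof (exp_ineq1_le (u-1)). lra.
Qed.

Lemma ln_ge_1_inv u : 0 < u -> 1 - / u <= ln u.
Proof.
  intros Hu. pose proof (ln_le_sub1 (/u) (Rinv_0_lt_compat _ Hu)).
  rewrite ln_Rinv in H by auto. lra.
Qed.

Lemma atan_le_id z : 0 <= z -> atan z <= z.
Proof.
  intros Hz. assert (H := deriv_mono (fun t => t - atan t) (fun t => 1 - / (1 + t^2)) 0 z Hz).
  cbv beta in H. rewrite atan_0 in H. assert (0 - 0 <= z - atan z); [|lra].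
  apply H.
  - intros t _. apply (is_derive_minus (fun t => t) atan).
    + auto_derive; auto.
    + assert (H1 := is_derive_atan t). unfold Rsqr in H1. simpl. replace (t * (t * 1)) with (t * t) by ring. exact H1.
  - intros t _. assert (1 <= 1 + t^2) by (pose proof (pow2_ge_0 t); lra).
    assert (/ (1 + t^2) <= 1). { rewrite <- Rinv_1. apply Rinv_le_contravar; lra. } lra.
Qed.

Lemma atan_ge z : 0 <= z -> z / (1 + z^2) <= atan z.
Proof.
  intros Hz. assert (H := deriv_mono (fun t => atan t - t / (1 + t^2))
     (fun t => 2 * t^2 / (1 + t^2)^2) 0 z Hz).
  cbv beta in H. rewrite atan_0 in H. assert (0 - 0 / (1 + 0^2) <= atan z - z / (1 + z^2)); [|lra].
  apply H.
  - intros t _. assert (0 < 1 + t^2) by (pose proof (pow2_ge_0 t); lra).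
    auto_derive. { simpl in *. lra. } simpl in *. field. lra.
  - intros t _. assert (0 < 1 + t^2) by (pose proof (pow2_ge_0 t); lra).
    apply Rmult_le_pos; [pose proof (pow2_ge_0 t); lra|]. apply Rlt_le, Rinv_0_lt_compat. apply pow_lt; lra.
Qed.

Definition Qg (A B C y : R) := A * y^2 + B * y + C.

Lemma tau_props (A B C : R) (HA : 0 < A) (HB : 0 <= B) (HC : 0 <= C) :
  (forall y, 0 < y -> is_derive (tau A B C) y (- / Qg A B C y)) /\
  (forall y, 0 < y -> y / Qg A B C y <= tau A B C y /\ tau A B C y <= / (A * y)).
Proof.
  set (D := B ^ 2 - 4 * A * C).
  assert (HD : D <= B^2) by (unfold D; nra).
  destruct (Rlt_dec 0 D) as [Dpos|Dnpos].
  -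
    set (s := sqrt D).
    assert (Hs2 : s * s = D) by (apply sqrt_sqrt; lra).
    assert (Hs0 : 0 < s) by (apply sqrt_lt_R0; lra).
    assert (HsB : s <= B).
    { unfold s. rewrite <- (sqrt_pow2 B HB). apply sqrt_le_1_alt. lra. }
    set (r1 := (- B - s) / (2 * A)). set (r2 := (- B + s) / (2 * A)).
    assert (Hr2 : r2 <= 0) by (unfold r2; apply Rmult_le_reg_r with (2*A); [lra|]; field_simplify; lra).
    assert (Hr12 : r1 < r2) by (unfold r1, r2; apply Rmult_lt_reg_r with (2*A); [lra|]; field_simplify; lra).
    assert (Hdiff : r2 - r1 = s / A) by (unfold r1, r2; field; lra).
    assert (HQ : forall y, Qg A B C y = A * (y - r1) * (y - r2)).
    { intros y. unfold Qg, r1, r2. field_simplify; [|lra].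
      replace (s^2) with D by (simpl; lra). unfold D. field. lra. }
    assert (Htau : forall y, tau A B C y = / (A * (r2 - r1)) * ln ((y - r1) / (y - r2))).
    { intros y. unfold tau. fold D. destruct (Rlt_dec 0 D); [|lra]. fold s. reflexivity. }
    split.
    + intros y Hy. apply (is_derive_ext (fun y => / (A * (r2 - r1)) * ln ((y - r1) / (y - r2)))).
      { intros; rewrite Htau; reflexivity. }
      auto_derive.
      * split; [lra|]. split; [apply Rdiv_lt_0_compat; lra| auto].
      * rewrite HQ. field. repeat split; lra.
    + intros y Hy. rewrite Htau. rewrite HQ.
      assert (Hu : 0 < (y - r1) / (y - r2)) by (apply Rdiv_lt_0_compat; lra).
      pose proof (ln_le_sub1 _ Hu). pose proof (ln_ge_1_inv _ Hu).
      assert (HK : 0 < / (A * (r2 - r1))) by (apply Rinv_0_lt_compat, Rmult_lt_0_compat; lra).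
      split.
      * apply Rle_trans with (/ (A * (r2 - r1)) * (1 - / ((y - r1) / (y - r2)))).
        -- replace (1 - / ((y - r1) / (y - r2))) with ((r2 - r1) / (y - r1)) by (field; lra).
           replace (/ (A * (r2 - r1)) * ((r2 - r1) / (y - r1))) with (/ (A * (y - r1))) by (field; lra).
           apply Rmult_le_reg_r with (A * (y - r1) * (y - r2)).
           { apply Rmult_lt_0_compat; [apply Rmult_lt_0_compat|]; lra. }
           field_simplify; lra.
        -- apply Rmult_le_compat_l; lra.
      * apply Rle_trans with (/ (A * (r2 - r1)) * ((y - r1) / (y - r2) - 1)).
        -- apply Rmult_le_compat_l; lra.
        -- replace ((y - r1) / (y - r2) - 1) with ((r2 - r1) / (y - r2)) by (field; lra).
           replace (/ (A * (r2 - r1)) * ((r2 - r1) / (y - r2))) with (/ (A * (y - r2))) by (field; lra).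
           apply Rinv_le_contravar. apply Rmult_lt_0_compat; lra. apply Rmult_le_compat_l; lra.
  - destruct (Req_dec D 0) as [D0|D0].
    + set (r := - B / (2 * A)).
      assert (Hr : r <= 0) by (unfold r; apply Rmult_le_reg_r with (2*A); [lra|]; field_simplify; lra).
      assert (HQ : forall y, Qg A B C y = A * (y - r)^2).
      { intros y. unfold Qg, r. field_simplify; [|lra]. assert (B^2 = 4*A*C) by (unfold D in D0; lra).
        field_simplify; [|lra]. rewrite H. field. lra. }
      assert (Htau : forall y, tau A B C y = / (A * (y - r))).
      { intros y. unfold tau. fold D. destruct (Rlt_dec 0 D); [lra|].
        destruct (Req_EM_T D 0); [|lra]. reflexivity. }
      split.
      * intros y Hy. apply (is_derive_ext (fun y => / (A * (y - r)))). { intros; rewrite Htau; reflexivity. }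
        auto_derive. { apply Rgt_not_eq, Rmult_lt_0_compat; lra. }
        rewrite HQ. field. lra.
      * intros y Hy. rewrite Htau, HQ. split.
        -- apply Rmult_le_reg_r with (A * (y - r) ^ 2).
           { apply Rmult_lt_0_compat; [lra| apply pow_lt; lra]. }
           field_simplify; try lra. 
        -- apply Rinv_le_contravar. apply Rmult_lt_0_compat; lra. apply Rmult_le_compat_l; lra.
    + assert (Dneg : D < 0) by lra.
      set (p := - B / (2 * A)). set (q := sqrt (- D) / (2 * A)).
      assert (Hp : p <= 0) by (unfold p; apply Rmult_le_reg_r with (2*A); [lra|]; field_simplify; lra).
      assert (Hsq : sqrt (- D) * sqrt (- D) = - D) by (apply sqrt_sqrt; lra).
      assert (Hsq0 : 0 < sqrt (-D)) by (apply sqrt_lt_R0; lra).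
      assert (Hq : 0 < q) by (unfold q; apply Rdiv_lt_0_compat; lra).
      assert (HQ : forall y, Qg A B C y = A * ((y - p)^2 + q^2)).
      { intros y. unfold Qg, p, q. field_simplify; [|lra]. replace (sqrt (-D) ^ 2) with (-D) by (simpl; lra).
        unfold D. field. lra. }
      assert (Htau : forall y, tau A B C y = (PI / 2 - atan ((y - p) / q)) / (A * q)).
      { intros y. unfold tau. fold D. destruct (Rlt_dec 0 D); [lra|].
        destruct (Req_EM_T D 0); [lra|]. reflexivity. }
      split.
      * intros y Hy. apply (is_derive_ext (fun y => (PI / 2 - atan ((y - p) / q)) / (A * q))).
        { intros; rewrite Htau; reflexivity. }
        auto_derive; [auto|].
        rewrite HQ. assert (0 < (y-p)^2 + q^2) by (assert (0 < q^2) by (apply pow_lt; lra); pose proof (pow2_ge_0 (y-p)); lra).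
        field. simpl in *. split; [lra|]. split; [lra|].
        replace (q * q + (y - p) * (y - p)) with ((y-p)^2 + q^2) by ring. lra.
      * intros y Hy. rewrite Htau, HQ.
        assert (Hv : 0 < (y - p) / q) by (apply Rdiv_lt_0_compat; lra).
        rewrite <- (atan_inv _ Hv).
        assert (Hiv : 0 < / ((y - p) / q)) by (apply Rinv_0_lt_compat; auto).
        pose proof (atan_le_id _ (Rlt_le _ _ Hiv)). pose proof (atan_ge _ (Rlt_le _ _ Hiv)).
        assert (HAq : 0 < A * q) by (apply Rmult_lt_0_compat; lra).
        split.
        -- set (v := (y - p) / q) in *.
           assert (Hpq : 0 < (y - p) ^ 2 + q ^ 2) by (assert (0 < q^2) by (apply pow_lt; lra); pose proof (pow2_ge_0 (y-p)); lra).
           assert (E1 : / v / (1 + (/ v)^2) = v / (v^2 + 1)).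
           { assert (0 < v^2) by (apply pow_lt; lra). field. split; lra. }
           assert (E2 : v / (v^2 + 1) / (A * q) = (y - p) / (A * ((y - p) ^ 2 + q ^ 2))).
           { unfold v. field. repeat split; try lra. }
           apply Rle_trans with (v / (v^2 + 1) / (A * q)).
           ++ rewrite E2. apply Rmult_le_reg_r with (A * ((y - p) ^ 2 + q ^ 2)).
              { apply Rmult_lt_0_compat; lra. }
              field_simplify; lra.
           ++ rewrite <- E1. apply Rmult_le_compat_r; [left; apply Rinv_0_lt_compat; lra| lra].
        -- apply Rle_trans with (/ ((y - p) / q) / (A * q)).
           ++ unfold Rdiv at 1 3. apply Rmult_le_compat_r; [left; apply Rinv_0_lt_compat; lra| lra].
           ++ replace (/ ((y - p) / q) / (A * q)) with (/ (A * (y - p))) by (field; lra).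
              apply Rinv_le_contravar. apply Rmult_lt_0_compat; lra. apply Rmult_le_compat_l; lra.
Qed.


Lemma der_mult (f g : R -> R) z df dg : is_derive f z df -> is_derive g z dg ->
  is_derive (fun z => f z * g z) z (df * g z + f z * dg).
Proof. intros H1 H2. apply (is_derive_mult f g z df dg H1 H2). intros; apply Rmult_comm. Qed.

Lemma der_plus (f g : R -> R) z df dg : is_derive f z df -> is_derive g z dg ->
  is_derive (fun z => f z + g z) z (df + dg).
Proof. intros H1 H2. apply (is_derive_plus f g z df dg H1 H2). Qed.

Lemma der_comp (f g : R -> R) z df dg : is_derive f (g z) df -> is_derive g z dg ->
  is_derive (fun z => f (g z)) z (dg * df).
Proof. intros H1 H2. apply (is_derive_comp f g z df dg H1 H2). Qed.

Lemma der_ext (f g : R -> R) z l : (forall t, f t = g t) -> is_derive f z l -> is_derive g z l.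
Proof. intros H1 H2. apply (is_derive_ext f g z l H1 H2). Qed.

Lemma shift_id (f : nat -> R) N T :
  sum_f_R0 (fun k => f k * (INR k * T^(k-1)) / INR (Factorial.fact k)) (S N)
  = sum_f_R0 (fun j => f (S j) * T^j / INR (Factorial.fact j)) N.
Proof.
  rewrite sum_shift. simpl (INR 0). rewrite Rmult_0_l, Rmult_0_r. unfold Rdiv at 1. rewrite Rmult_0_l, Rplus_0_l.
  apply sum_eq. intros j _. replace (S j - 1)%nat with j by lia.
  rewrite fact_simpl, mult_INR. field. split; [apply INR_fact_neq_0| apply not_0_INR; lia].
Qed.

Section Transport.
Variables a b c al0 ga0 : nat.
Hypothesis HA : (0 < a)%nat.
Hypothesis Hal0 : (0 < al0)%nat.

Definition PP := P a b c al0 ga0.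
Definition dPP := dP a b c al0 ga0.
Definition QQ := Q a b c.
Definition LL := L al0 ga0.
Definition tt := tau (INR a) (INR c) (INR b).

Definition G n N z T := sum_f_R0 (fun k => PP (n+k) z * T^k / INR (Factorial.fact k)) N.
Definition H1 n N z T := sum_f_R0 (fun k => dPP (n+k) z * T^k / INR (Factorial.fact k)) N.

Lemma QQ_eq y : QQ y = Qg (INR a) (INR c) (INR b) y.
Proof. unfold QQ, Q, Qg. ring. Qed.

Lemma tt_props : (forall y, 0 < y -> is_derive tt y (- / QQ y)) /\
  (forall y, 0 < y -> y / QQ y <= tt y /\ tt y <= / (INR a * y)).
Proof.
  assert (HA' : 0 < INR a) by (apply lt_0_INR; lia).
  destruct (tau_props (INR a) (INR c) (INR b) HA' (pos_INR c) (pos_INR b)) as [H1' H2'].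
  split; intros y Hy; rewrite QQ_eq; auto.
Qed.

Lemma tt_deriv y : 0 < y -> is_derive tt y (- / QQ y).
Proof. apply tt_props. Qed.
Lemma tt_bounds y : 0 < y -> y / QQ y <= tt y /\ tt y <= / (INR a * y).
Proof. apply tt_props. Qed.

Lemma QQ_pos y : 0 < y -> 0 < QQ y.
Proof. apply (Q_pos a b c al0); auto. Qed.

Lemma tt_pos y : 0 < y -> 0 < tt y.
Proof.
  intros Hy. destruct (tt_bounds y Hy). assert (0 < y / QQ y) by (apply Rdiv_lt_0_compat; auto; apply QQ_pos; auto). lra.
Qed.

Lemma tt_mono x y : 0 < x -> x <= y -> tt y <= tt x.
Proof.
  intros Hx Hxy. assert (H := deriv_mono (fun z => - tt z) (fun z => / QQ z) x y Hxy).
  cbv beta in H. enough (- tt x <= - tt y) by lra. apply H.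
  - intros z Hz. replace (/ QQ z) with (- (- / QQ z)) by ring. apply (is_derive_opp tt). apply tt_deriv; lra.
  - intros z Hz. left. apply Rinv_0_lt_compat, QQ_pos; lra.
Qed.

Lemma QQ_mono x y : 0 <= x -> x <= y -> QQ x <= QQ y.
Proof.
  intros Hx Hxy. unfold QQ, Q. pose proof (pos_INR a). pose proof (pos_INR c).
  assert (x^2 <= y^2) by (apply pow_incr; lra). nra.
Qed.

Lemma LL_mono x y : x <= y -> LL x <= LL y.
Proof. intros. unfold LL, L. pose proof (pos_INR al0). nra. Qed.

Lemma G_term_derive m k (T : R -> R) dT z :
  is_derive T z dT ->
  is_derive (fun z => PP m z * T z ^ k / INR (Factorial.fact k)) z
    (dPP m z * T z^k / INR (Factorial.fact k) + PP m z * (INR k * T z^(k-1)) / INR (Factorial.fact k) * dT).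
Proof.
  intros HT.
  apply (der_ext (fun z => / INR (Factorial.fact k) * (PP m z * T z ^ k))).
  { intros t. unfold Rdiv; ring. }
  eapply is_derive_ext_loc; [apply filter_forall; intros; reflexivity|].
  replace (dPP m z * T z ^ k / INR (Factorial.fact k) + PP m z * (INR k * T z ^ (k - 1)) / INR (Factorial.fact k) * dT)
    with (/ INR (Factorial.fact k) * (dPP m z * T z ^ k + PP m z * (INR k * dT * T z ^ Init.Nat.pred k))).
  2:{ replace (k - 1)%nat with (Init.Nat.pred k) by lia. field. apply INR_fact_neq_0. }
  apply is_derive_scal. apply der_mult.
  - apply P_derive; auto.
  - apply (is_derive_pow T k z dT HT).
Qed.

Lemma G_derive n N (T : R -> R) dT z :
  is_derive T z dT ->
  is_derive (fun z => G n N (z) (T z)) z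
    (H1 n N z (T z) + dT * sum_f_R0 (fun k => PP (n+k) z * (INR k * T z^(k-1)) / INR (Factorial.fact k)) N).
Proof.
  intros HT. unfold G, H1. induction N.
  - simpl. eapply is_derive_ext. { intros; reflexivity. }
    replace (dPP (n + 0) z * 1 / 1 + dT * (PP (n + 0) z * (0 * 1) / 1)) with
      (dPP (n+0)%nat z * T z^0 / INR (Factorial.fact 0) + PP (n+0)%nat z * (INR 0 * T z^(0-1)) / INR (Factorial.fact 0) * dT)
      by (simpl; field).
    apply (G_term_derive (n+0) 0 T dT z HT).
  - cbn [sum_f_R0]. replace (sum_f_R0 (fun k => dPP (n + k) z * T z ^ k / INR (Factorial.fact k)) N +
      dPP (n + S N) z * T z ^ S N / INR (Factorial.fact (S N)) +
      dT * (sum_f_R0 (fun k => PP (n + k) z * (INR k * T z ^ (k - 1)) / INR (Factorial.fact k)) N +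
      PP (n + S N) z * (INR (S N) * T z ^ (S N - 1)) / INR (Factorial.fact (S N))))
     with ((sum_f_R0 (fun k => dPP (n + k) z * T z ^ k / INR (Factorial.fact k)) N +
      dT * sum_f_R0 (fun k => PP (n + k) z * (INR k * T z ^ (k - 1)) / INR (Factorial.fact k)) N) +
      (dPP (n + S N) z * T z ^ S N / INR (Factorial.fact (S N)) +
      PP (n + S N) z * (INR (S N) * T z ^ (S N - 1)) / INR (Factorial.fact (S N)) * dT)) by ring.
    apply (der_plus (fun z => sum_f_R0 (fun k => PP (n+k) z * T z ^ k / INR (Factorial.fact k)) N) (fun z => PP (n + S N) z * T z ^ S N / INR (Factorial.fact (S N)))).
    + exact IHN.
    + apply G_term_derive; auto.
Qed.

Lemma dT_sum n N z T :
  sum_f_R0 (fun k => PP (n+k) z * (INR k * T^(k-1)) / INR (Factorial.fact k)) (S N)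
  = QQ z * H1 n N z T + LL z * G n N z T.
Proof.
  rewrite (shift_id (fun k => PP (n+k) z)). unfold H1, G. rewrite !scal_sum, <- sum_plus.
  apply sum_eq. intros j _. replace (n + S j)%nat with (S (n + j)) by lia.
  unfold PP. rewrite (P_rec a b c al0 ga0 HA Hal0). fold (dPP (n+j) z). unfold QQ, LL. unfold Rdiv. ring.
Qed.

Lemma G_nonneg n N z T : 0 <= z -> 0 <= T -> 0 <= G n N z T.
Proof.
  intros. unfold G. apply sum_nonneg. intros k _.
  apply Rmult_le_pos; [apply Rmult_le_pos; [apply P_nonneg; auto| apply pow_le; auto]|].
  left; apply Rinv_0_lt_compat, INR_fact_lt_0.
Qed.

Lemma transport_U n N y Y : 0 < y -> y <= Y ->
  G n N y (tt y - tt Y) <= exp (LL Y * (tt y - tt Y)) * PP n Y.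
Proof.
  intros Hy HyY.
  set (K := LL Y).
  set (psi := fun z => G n (S N) z (tt z - tt Y) * exp (K * (tt y - tt z))).
  assert (Hd : forall z, y <= z <= Y -> is_derive psi z
     ((H1 n (S N) z (tt z - tt Y) + (- / QQ z) * (QQ z * H1 n N z (tt z - tt Y) + LL z * G n N z (tt z - tt Y))) * exp (K * (tt y - tt z))
      + G n (S N) z (tt z - tt Y) * ((K * (- (- / QQ z))) * exp (K * (tt y - tt z))))).
  { intros z Hz. unfold psi. apply (der_mult (fun z => G n (S N) z (tt z - tt Y)) (fun z => exp (K * (tt y - tt z)))).
    - rewrite <- dT_sum. apply (G_derive n (S N) (fun z => tt z - tt Y)).
      apply (der_ext (fun z => tt z + (- tt Y))). { intros; ring. }
      rewrite <- (Rplus_0_r (- / QQ z)). apply der_plus. apply tt_deriv; lra. auto_derive; auto.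
    - apply (der_comp exp (fun z => K * (tt y - tt z))). apply is_derive_exp.
      apply is_derive_scal. apply (der_ext (fun z => tt y + (- tt z))). { intros; ring. }
      rewrite <- (Rplus_0_l (- (- / QQ z))). apply der_plus. auto_derive; auto.
      apply (is_derive_opp tt). apply tt_deriv; lra. }
  assert (Hm := deriv_mono psi _ y Y HyY Hd).
  assert (psi y <= psi Y).
  { apply Hm. intros z Hz.
    assert (Hz0 : 0 < z) by lra.
    assert (HT : 0 <= tt z - tt Y) by (pose proof (tt_mono z Y Hz0 (proj2 Hz)); lra).
    pose proof (QQ_pos z Hz0).
    assert (HE : 0 < exp (K * (tt y - tt z))) by apply exp_pos.
    assert (HG : G n (S N) z (tt z - tt Y) = G n N z (tt z - tt Y) + PP (n + S N) z * (tt z - tt Y)^(S N) / INR (Factorial.fact (S N))) by reflexivity.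
    assert (HH : H1 n (S N) z (tt z - tt Y) = H1 n N z (tt z - tt Y) + dPP (n + S N) z * (tt z - tt Y)^(S N) / INR (Factorial.fact (S N))) by reflexivity.
    assert (Htop1 : 0 <= PP (n + S N) z * (tt z - tt Y)^(S N) / INR (Factorial.fact (S N))).
    { apply Rmult_le_pos; [apply Rmult_le_pos; [apply P_nonneg; lra| apply pow_le; auto]|].
      left; apply Rinv_0_lt_compat, INR_fact_lt_0. }
    assert (Htop2 : 0 <= dPP (n + S N) z * (tt z - tt Y)^(S N) / INR (Factorial.fact (S N))).
    { apply Rmult_le_pos; [apply Rmult_le_pos; [apply dP_nonneg; lra| apply pow_le; auto]|].
      left; apply Rinv_0_lt_compat, INR_fact_lt_0. }
    assert (HG0 : 0 <= G n N z (tt z - tt Y)) by (apply G_nonneg; lra).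
    assert (HKL : LL z <= K) by (apply LL_mono; lra).
    assert (HL0 : 0 <= LL z) by (apply L_nonneg; lra).
    rewrite HG, HH.
    replace ((H1 n N z (tt z - tt Y) + dPP (n + S N) z * (tt z - tt Y) ^ S N / INR (Factorial.fact (S N)) +
      - / QQ z * (QQ z * H1 n N z (tt z - tt Y) + LL z * G n N z (tt z - tt Y))) * exp (K * (tt y - tt z)) +
      (G n N z (tt z - tt Y) + PP (n + S N) z * (tt z - tt Y) ^ S N / INR (Factorial.fact (S N))) *
      (K * - - / QQ z * exp (K * (tt y - tt z))))
     with (exp (K * (tt y - tt z)) * (dPP (n + S N) z * (tt z - tt Y) ^ S N / INR (Factorial.fact (S N))
       + / QQ z * ((K - LL z) * G n N z (tt z - tt Y) + K * (PP (n + S N) z * (tt z - tt Y) ^ S N / INR (Factorial.fact (S N))))))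
     by (field; repeat split; try lra; try apply INR_fact_neq_0).
    apply Rmult_le_pos; [lra|]. apply Rplus_le_le_0_compat; auto.
    apply Rmult_le_pos; [left; apply Rinv_0_lt_compat; auto|].
    apply Rplus_le_le_0_compat; apply Rmult_le_pos; lra. }
  unfold psi in H. rewrite Rminus_diag, Rmult_0_r, exp_0, Rmult_1_r in H.
  assert (HGY : G n (S N) Y 0 = PP n Y).
  { unfold G. rewrite sum_shift.
    assert (Hz : sum_f_R0 (fun i => PP (n + S i) Y * 0 ^ S i / INR (Factorial.fact (S i))) N = 0).
    { clear. induction N. - simpl. unfold Rdiv. ring. - rewrite tech5, IHN. simpl. unfold Rdiv. ring. }
    rewrite Hz. rewrite Nat.add_0_r. simpl. unfold Rdiv. rewrite Rinv_1. ring. }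
  replace (tt Y - tt Y) with 0 in H by ring. rewrite HGY in H.
  assert (G n N y (tt y - tt Y) <= G n (S N) y (tt y - tt Y)).
  { unfold G at 2. cbn [sum_f_R0]. fold (G n N y (tt y - tt Y)).
    assert (0 <= PP (n + S N) y * (tt y - tt Y) ^ S N / INR (Factorial.fact (S N))); [|lra].
    assert (0 <= tt y - tt Y) by (pose proof (tt_mono y Y Hy HyY); lra).
    apply Rmult_le_pos; [apply Rmult_le_pos; [apply P_nonneg; lra| apply (pow_le _ (S N)); auto]|].
    left; apply Rinv_0_lt_compat, INR_fact_lt_0. }
  rewrite Rmult_comm. lra.
Qed.

End Transport.


Definition NBs (p M : nat) (r : R) := sum_f_R0 (fun k => Binomial.C (p + k) k * r^k) M.

Lemma C_nonneg n k : 0 <= Binomial.C n k.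
Proof.
  unfold Binomial.C. apply Rmult_le_pos; [apply pos_INR|]. left; apply Rinv_0_lt_compat.
  apply Rmult_lt_0_compat; apply INR_fact_lt_0.
Qed.

Lemma C_n_n n : Binomial.C n n = 1.
Proof. unfold Binomial.C. rewrite Nat.sub_diag. simpl. field. apply INR_fact_neq_0. Qed.

Lemma C_n_0 n : Binomial.C n 0 = 1.
Proof. unfold Binomial.C. rewrite Nat.sub_0_r. simpl. field. apply INR_fact_neq_0. Qed.

Lemma NBs_mono p M r : 0 <= r -> NBs p M r <= NBs p (S M) r.
Proof.
  intros Hr. unfold NBs. rewrite tech5.
  assert (0 <= Binomial.C (p + S M) (S M) * r ^ S M) by (apply Rmult_le_pos; [apply C_nonneg| apply pow_le; auto]).
  lra.
Qed.

Lemma NBs_rec p M r : NBs (S p) (S M) r = NBs p (S M) r + r * NBs (S p) M r.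
Proof.
  unfold NBs. rewrite !sum_shift. rewrite !Nat.add_0_r, !C_n_0.
  rewrite scal_sum.
  assert (forall i, Binomial.C (S p + S i) (S i) = Binomial.C (p + S i) (S i) + Binomial.C (S p + i) i).
  { intros i. replace (S p + i)%nat with (p + S i)%nat by lia. replace (S p + S i)%nat with (S (p + S i)) by lia.
    rewrite <- pascal by lia. ring. }
  rewrite (sum_eq _ (fun i => Binomial.C (p + S i) (S i) * r ^ S i + Binomial.C (S p + i) i * r ^ i * r)).
  - rewrite sum_plus. ring.
  - intros i _. rewrite H. simpl. ring.
Qed.

Lemma NBs_bound p M r : 0 <= r < 1 -> NBs p M r <= / (1 - r) ^ (S p).
Proof.
  intros [Hr0 Hr1]. revert M. induction p; intros M.
  - unfold NBs. rewrite sum_eq with (Bn := fun k => r^k).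
    2:{ intros i _. simpl. rewrite C_n_n. ring. }
    assert (H := GP_finite r M).
    assert (0 <= r ^ (M + 1)) by (apply pow_le; auto).
    apply Rmult_le_reg_r with (1 - r); [lra|]. simpl. rewrite Rmult_1_r.
    rewrite Rinv_l by lra. lra.
  - assert (Hs : NBs (S p) M r * (1 - r) <= NBs p M r).
    { destruct M.
      - unfold NBs. simpl. rewrite !C_n_0. lra.
      - pose proof (NBs_mono (S p) M r Hr0). rewrite NBs_rec in *.
        assert (0 <= r * (NBs p (S M) r + r * NBs (S p) M r - NBs (S p) M r)) by (apply Rmult_le_pos; lra).
        nra. }
    specialize (IHp M).
    assert (0 < (1 - r) ^ S p) by (apply pow_lt; lra).
    apply Rmult_le_reg_r with (1 - r); [lra|].
    apply Rle_trans with (NBs p M r); auto.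
    apply Rle_trans with (/ (1 - r) ^ S p); auto.
    right. replace ((1-r)^(S (S p))) with ((1-r) * (1-r)^(S p)) by (simpl; ring). field. split; lra.
Qed.

(* a nonneg summable-bounded sequence has small terms somewhere *)
Lemma NB_small_term p q eps : 0 <= q < 1 -> 0 < eps ->
  exists N, Binomial.C (p + N) N * q ^ N < eps.
Proof.
  intros Hq He. destruct (Classical_Prop.classic (exists N, Binomial.C (p + N) N * q ^ N < eps)) as [H|H]; auto.
  exfalso.
  assert (Hall : forall N, eps <= Binomial.C (p + N) N * q ^ N).
  { intros N. apply Rnot_lt_le. intro. apply H. exists N; auto. }
  set (B := / (1 - q) ^ S p).
  destruct (archimed (B / eps)) as [Hu _].
  set (M := Z.to_nat (up (B / eps))).
  assert (HM : B / eps < INR M).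
  { unfold M. assert (0 <= B / eps). { apply Rmult_le_pos. unfold B. left; apply Rinv_0_lt_compat, pow_lt; lra. left; apply Rinv_0_lt_compat; auto. }
    rewrite INR_IZR_INZ, Z2Nat.id; auto. apply le_IZR. lra. }
  assert (Hsum : INR (S M) * eps <= NBs p M q).
  { unfold NBs. clear HM. induction M.
    - simpl. rewrite Rmult_1_l. specialize (Hall 0%nat). auto.
    - rewrite tech5, S_INR. specialize (Hall (S M)). lra. }
  pose proof (NBs_bound p M q Hq). fold B in H0.
  assert (B < INR M * eps) by (apply Rmult_lt_reg_r with (/ eps); [apply Rinv_0_lt_compat; auto|]; field_simplify; try lra; unfold Rdiv in HM; lra).
  rewrite S_INR in Hsum. lra.
Qed.


Lemma pow_div_distr x y n : y <> 0 -> (x / y)^n = x^n / y^n.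
Proof. intros Hy. induction n; simpl. field. rewrite IHn. field. split; auto. apply pow_nonzero; auto. Qed.

Section TL.
Variables a b c al0 ga0 : nat.
Hypothesis HA : (0 < a)%nat.
Hypothesis Hal0 : (0 < al0)%nat.

Local Notation PPs := (PP a b c al0 ga0).
Local Notation dPPs := (dPP a b c al0 ga0).
Local Notation QQs := (QQ a b c).
Local Notation LLs := (LL al0 ga0).
Local Notation tts := (tt a b c).
Local Notation Gs := (G a b c al0 ga0).
Local Notation H1s := (H1 a b c al0 ga0).

Lemma ttm x y : 0 < x -> x <= y -> tts y <= tts x.
Proof. intros; eapply tt_mono; eauto. Qed.
Lemma ttp y : 0 < y -> 0 < tts y.
Proof. intros; eapply tt_pos; eauto. Qed.
Lemma ttb y : 0 < y -> y / QQs y <= tts y /\ tts y <= / (INR a * y).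
Proof. intros; eapply tt_bounds; eauto. Qed.
Lemma ttd y : 0 < y -> is_derive tts y (- / QQs y).
Proof. intros; eapply tt_deriv; eauto. Qed.
Lemma Qp y : 0 < y -> 0 < QQs y.
Proof. intros; eapply QQ_pos; eauto. Qed.

Lemma G_at0 n N Y : Gs n N Y 0 = PPs n Y.
Proof.
  unfold G. destruct N.
  - simpl. rewrite Nat.add_0_r. unfold Rdiv. rewrite Rinv_1. ring.
  - rewrite sum_shift.
    assert (Hz : sum_f_R0 (fun i => PPs (n + S i) Y * 0 ^ S i / INR (Factorial.fact (S i))) N = 0).
    { clear. induction N. - simpl. unfold Rdiv. ring. - rewrite tech5, IHN. simpl. unfold Rdiv. ring. }
    rewrite Hz. rewrite Nat.add_0_r. simpl. unfold Rdiv. rewrite Rinv_1. ring.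
Qed.

Lemma P0_one y : PPs 0 y = 1.
Proof. unfold PP, P, Pn. simpl. unfold wM. ring. Qed.

Lemma G_term_le n N k z T : 0 <= z -> 0 <= T -> (k <= N)%nat ->
  PPs (n + k) z * T^k / INR (Factorial.fact k) <= Gs n N z T.
Proof.
  intros Hz HT Hk. unfold G.
  apply (sum_term_le (fun k => PPs (n + k) z * T ^ k / INR (Factorial.fact k)) N k); auto.
  intros j _. apply Rmult_le_pos; [apply Rmult_le_pos; [apply P_nonneg; auto| apply pow_le; auto]|].
  left; apply Rinv_0_lt_compat, INR_fact_lt_0.
Qed.

Lemma P_upper m y Y : 0 < y -> y <= Y ->
  PPs m y * (tts y - tts Y)^m / INR (Factorial.fact m) <= exp (LLs Y * (tts y - tts Y)).
Proof.
  intros Hy HyY.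
  pose proof (transport_U a b c al0 ga0 HA Hal0 0 m y Y Hy HyY) as H.
  rewrite P0_one, Rmult_1_r in H.
  eapply Rle_trans; [|exact H].
  apply (G_term_le 0 m m y). lra. pose proof (ttm y Y Hy HyY). lra. lia.
Qed.

Lemma transport_L n N x Y B : 0 < x -> x <= Y ->
  (forall z, x <= z <= Y -> dPPs (n + S N) z * (tts z - tts Y)^(S N) / INR (Factorial.fact (S N)) <= B) ->
  PPs n Y - Gs n (S N) x (tts x - tts Y) <= B * (Y - x).
Proof.
  intros Hx HxY HB.
  set (psi := fun z => Gs n (S N) z (tts z - tts Y)).
  assert (Hd : forall z, x <= z <= Y -> is_derive psi z
     (H1s n (S N) z (tts z - tts Y) + (- / QQs z) * (QQs z * H1s n N z (tts z - tts Y) + LLs z * Gs n N z (tts z - tts Y)))).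
  { intros z Hz. unfold psi. rewrite <- dT_sum by auto. apply (G_derive a b c al0 ga0 HA Hal0 n (S N) (fun z => tts z - tts Y)).
    apply (der_ext (fun z => tts z + (- tts Y))). { intros; ring. }
    rewrite <- (Rplus_0_r (- / QQs z)). apply der_plus. apply ttd; lra. auto_derive; auto. }
  assert (H := deriv_bound psi _ x Y B HxY Hd).
  assert (psi Y - psi x <= B * (Y - x)).
  { apply H. intros z Hz.
    assert (Hz0 : 0 < z) by lra.
    assert (HT : 0 <= tts z - tts Y) by (pose proof (ttm z Y Hz0 (proj2 Hz)); lra).
    pose proof (Qp z Hz0).
    assert (HH : H1s n (S N) z (tts z - tts Y) = H1s n N z (tts z - tts Y) + dPPs (n + S N) z * (tts z - tts Y)^(S N) / INR (Factorial.fact (S N))) by reflexivity.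
    assert (HG0 : 0 <= Gs n N z (tts z - tts Y)) by (apply G_nonneg; auto; lra).
    assert (HL0 : 0 <= LLs z) by (apply L_nonneg; lra).
    specialize (HB z Hz). rewrite HH.
    replace (H1s n N z (tts z - tts Y) + dPPs (n + S N) z * (tts z - tts Y) ^ S N / INR (Factorial.fact (S N)) +
      - / QQs z * (QQs z * H1s n N z (tts z - tts Y) + LLs z * Gs n N z (tts z - tts Y)))
      with (dPPs (n + S N) z * (tts z - tts Y) ^ S N / INR (Factorial.fact (S N)) - / QQs z * (LLs z * Gs n N z (tts z - tts Y)))
      by (field; repeat split; try lra; try apply INR_fact_neq_0).
    assert (0 <= / QQs z * (LLs z * Gs n N z (tts z - tts Y))).
    { apply Rmult_le_pos; [left; apply Rinv_0_lt_compat; auto| apply Rmult_le_pos; auto]. }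
    lra. }
  unfold psi in H0. replace (tts Y - tts Y) with 0 in H0 by ring. rewrite G_at0 in H0. exact H0.
Qed.

Lemma exp_le_mono x y : x <= y -> exp x <= exp y.
Proof. intros H. destruct (Rle_lt_or_eq_dec _ _ H) as [H'|H']; [left; apply exp_increasing; auto| rewrite H'; lra]. Qed.

Lemma C_fact_rel p N : INR (Factorial.fact (p + N)) / INR (Factorial.fact N) = INR (Factorial.fact p) * Binomial.C (p + N) N.
Proof.
  unfold Binomial.C. replace (p + N - N)%nat with p by lia. field.
  split; apply INR_fact_neq_0.
Qed.

Lemma L_full p x Y : 0 < x -> x < Y -> forall eps, 0 < eps ->
  exists N, PPs p Y <= Gs p N x (tts x - tts Y) + eps.
Proof.
  intros Hx HxY eps Heps.
  assert (Ha : 0 < INR a) by (apply lt_0_INR; lia).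
  assert (HtY : 0 < tts Y) by (apply ttp; auto; lra).
  assert (Htx : 0 < tts x) by (apply ttp; auto; lra).
  assert (HtxY : tts Y <= tts x) by (apply ttm; auto; lra).
  assert (HQx : 0 < QQs x) by (apply Qp; auto).
  set (d := tts Y * QQs x / 2).
  assert (Hd : 0 < d) by (unfold d; apply Rmult_lt_0_compat; [apply Rmult_lt_0_compat|]; lra).
  assert (F1 : forall z, x <= z -> tts z - tts (z + d) <= tts Y / 2).
  { intros z Hz. assert (Hb := deriv_bound (fun w => - tts w) (fun w => / QQs w) z (z + d) (/ QQs x)).
    assert (- tts (z + d) - - tts z <= / QQs x * (z + d - z)).
    { apply Hb. lra.
      - intros w Hw. replace (/ QQs w) with (- (- / QQs w)) by ring. apply (is_derive_opp (tts)).
        apply ttd; lra.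
      - intros w Hw. apply Rinv_le_contravar; auto. apply QQ_mono; lra. }
    replace (/ QQs x * (z + d - z)) with (tts Y / 2) in H by (unfold d; field; lra). lra. }
  set (Y2 := Rmax (Y + d) (4 / (INR a * tts Y))).
  assert (HY2a : Y + d <= Y2) by apply Rmax_l.
  assert (HY2b : 4 / (INR a * tts Y) <= Y2) by apply Rmax_r.
  assert (HY2pos : 0 < Y2) by lra.
  assert (HtY2 : tts Y2 <= tts Y / 4).
  { destruct (ttb Y2 HY2pos) as [_ Hub].
    eapply Rle_trans; [exact Hub|].
    assert (H4 : 4 / tts Y <= INR a * Y2).
    { apply Rmult_le_compat_l with (r := INR a) in HY2b; [|lra].
      replace (INR a * (4 / (INR a * tts Y))) with (4 / tts Y) in HY2b by (field; lra). exact HY2b. }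
    replace (tts Y / 4) with (/ (4 / tts Y)) by (field; lra).
    apply Rinv_le_contravar; auto. apply Rdiv_lt_0_compat; lra. }
  assert (HtY2pos : 0 < tts Y2) by (apply ttp; auto).
  set (E0 := exp (LLs Y2 * tts x)).
  set (q := 1 - tts Y / (4 * tts x)).
  assert (Hq : 0 <= q < 1).
  { unfold q. split. apply Rmult_le_reg_r with (4 * tts x); [lra|]. field_simplify; lra.
    assert (0 < tts Y / (4 * tts x)) by (apply Rdiv_lt_0_compat; lra). lra. }
  set (A0 := E0 / d * (4 / tts Y)^p * INR (Factorial.fact p)).
  assert (HA0 : 0 < A0).
  { unfold A0. apply Rmult_lt_0_compat; [apply Rmult_lt_0_compat|].
    - apply Rdiv_lt_0_compat; [apply exp_pos| lra].
    - apply pow_lt. apply Rdiv_lt_0_compat; lra.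
    - apply INR_fact_lt_0. }
  assert (KB : forall N z, x <= z <= Y ->
     dPPs (p + S N) z * (tts z - tts Y)^(S N) / INR (Factorial.fact (S N))
       <= A0 * (Binomial.C (p + S N) (S N) * q ^ (S N))).
  { intros N z Hz. set (m := (p + S N)%nat).
    set (T := tts z - tts Y). set (t' := tts (z + d) - tts Y2).
    assert (Hz0 : 0 < z) by lra.
    assert (HT0 : 0 <= T) by (unfold T; pose proof (ttm z Y Hz0 (proj2 Hz)); lra).
    assert (Ht1 : T + tts Y / 4 <= t') by (unfold T, t'; specialize (F1 z (proj1 Hz)); lra).
    assert (Htzd : tts (z + d) <= tts x) by (apply ttm; auto; lra).
    assert (Ht2 : t' <= tts x) by (unfold t'; lra).
    assert (Ht0 : 0 < t') by lra.
    assert (Hzd : z + d <= Y2) by lra.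
    assert (U := P_upper m (z + d) Y2 ltac:(lra) Hzd). fold t' in U.
    assert (HE : exp (LLs Y2 * t') <= E0).
    { unfold E0. apply exp_le_mono. apply Rmult_le_compat_l; auto. apply L_nonneg; lra. }
    assert (Htm : 0 < t'^m) by (apply pow_lt; auto).
    assert (Hfm : 0 < INR (Factorial.fact m)) by apply INR_fact_lt_0.
    assert (HPm : PPs m (z + d) <= E0 * INR (Factorial.fact m) / t'^m).
    { apply Rmult_le_reg_r with (t'^m / INR (Factorial.fact m)).
      apply Rdiv_lt_0_compat; auto.
      replace (E0 * INR (Factorial.fact m) / t' ^ m * (t' ^ m / INR (Factorial.fact m))) with E0 by (field; lra).
      replace (PPs m (z + d) * (t' ^ m / INR (Factorial.fact m))) with (PPs m (z + d) * t' ^ m / INR (Factorial.fact m)) by (field; lra).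
      lra. }
    assert (Hcv : d * dPPs m z <= PPs m (z + d)) by (eapply dP_convex; eauto; lra).
    assert (Hdp : dPPs m z <= E0 * INR (Factorial.fact m) / t'^m / d).
    { apply Rmult_le_reg_l with d; auto. replace (d * (E0 * INR (Factorial.fact m) / t' ^ m / d)) with (E0 * INR (Factorial.fact m) / t' ^ m) by (field; lra). lra. }
    assert (Hfac : INR (Factorial.fact m) / INR (Factorial.fact (S N)) = INR (Factorial.fact p) * Binomial.C (p + S N) (S N)) by (unfold m; apply C_fact_rel).
    assert (Hpw : t'^m = t'^p * t'^(S N)) by (unfold m; apply pow_add).
    assert (HTt : T / t' <= q).
    { unfold q. apply Rle_trans with (1 - tts Y / (4 * t')).
      - apply Rmult_le_reg_r with t'; auto. field_simplify; lra.
      - assert (tts Y / (4 * tts x) <= tts Y / (4 * t')); [|lra].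
        apply Rmult_le_compat_l; [lra|]. apply Rinv_le_contravar; lra. }
    assert (HTt0 : 0 <= T / t') by (apply Rmult_le_pos; [auto| left; apply Rinv_0_lt_compat; auto]).
    assert (HTq : (T / t')^(S N) <= q^(S N)) by (apply pow_incr; auto).
    assert (Hinv : (/ t')^p <= (4 / tts Y)^p).
    { apply pow_incr. split. left; apply Rinv_0_lt_compat; auto.
      replace (4 / tts Y) with (/ (tts Y / 4)) by (field; lra). apply Rinv_le_contravar; lra. }
    assert (HTS : 0 <= T^(S N)) by (apply pow_le; auto).
    assert (HfS : 0 < INR (Factorial.fact (S N))) by apply INR_fact_lt_0.
    apply Rle_trans with (E0 * INR (Factorial.fact m) / t'^m / d * T^(S N) / INR (Factorial.fact (S N))).
    { unfold Rdiv. apply Rmult_le_compat_r. left; apply Rinv_0_lt_compat; auto.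
      apply Rmult_le_compat_r; auto. }
    replace (E0 * INR (Factorial.fact m) / t'^m / d * T^(S N) / INR (Factorial.fact (S N)))
      with (E0 / d * (INR (Factorial.fact m) / INR (Factorial.fact (S N))) * ((T / t')^(S N) * (/ t')^p)).
    2:{ rewrite Hpw, pow_div_distr, pow_inv by lra. field. repeat split; try lra; apply pow_nonzero; lra. }
    rewrite Hfac. unfold A0.
    assert (0 <= E0 / d) by (apply Rlt_le, Rdiv_lt_0_compat; [apply exp_pos| auto]).
    assert (0 <= INR (Factorial.fact p) * Binomial.C (p + S N) (S N)) by (apply Rmult_le_pos; [apply pos_INR| apply C_nonneg]).
    assert (0 <= (T / t')^(S N)) by (apply pow_le; auto).
    assert (0 <= (/ t')^p) by (apply pow_le; left; apply Rinv_0_lt_compat; auto).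
    assert (((T / t')^(S N) * (/ t')^p) <= q^(S N) * (4 / tts Y)^p) by (apply Rmult_le_compat; auto).
    apply Rle_trans with (E0 / d * (INR (Factorial.fact p) * Binomial.C (p + S N) (S N)) * (q^(S N) * (4 / tts Y)^p)).
    - apply Rmult_le_compat_l; auto. apply Rmult_le_pos; auto.
    - right. unfold m. ring. }
  set (eps' := Rmin (1/2) (eps / ((Y - x + 1) * A0))).
  assert (He' : 0 < eps').
  { unfold eps'. apply Rmin_glb_lt; [lra|]. apply Rdiv_lt_0_compat; auto. apply Rmult_lt_0_compat; lra. }
  destruct (NB_small_term p q eps' Hq He') as [K HK].
  destruct K as [|N].
  { exfalso. rewrite Nat.add_0_r, C_n_0 in HK. simpl in HK. assert (eps' <= 1/2) by apply Rmin_l. lra. }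
  exists (S N).
  assert (HL := transport_L p N x Y (A0 * (Binomial.C (p + S N) (S N) * q ^ S N)) Hx (Rlt_le _ _ HxY)
        (fun z Hz => KB N z Hz)).
  assert (A0 * (Binomial.C (p + S N) (S N) * q ^ S N) * (Y - x) <= eps).
  { assert (Hm : eps' <= eps / ((Y - x + 1) * A0)) by apply Rmin_r.
    apply Rle_trans with (A0 * eps' * (Y - x)).
    - apply Rmult_le_compat_r; [lra|]. apply Rmult_le_compat_l; lra.
    - apply Rle_trans with (A0 * (eps / ((Y - x + 1) * A0)) * (Y - x)).
      + apply Rmult_le_compat_r; [lra|]. apply Rmult_le_compat_l; lra.
      + replace (A0 * (eps / ((Y - x + 1) * A0)) * (Y - x)) with (eps * ((Y - x) / (Y - x + 1))) by (field; lra).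
        assert ((Y - x) / (Y - x + 1) <= 1).
        { apply Rmult_le_reg_r with (Y - x + 1); [lra|]. field_simplify; lra. }
        assert (0 <= (Y - x) / (Y - x + 1)) by (apply Rmult_le_pos; [lra| left; apply Rinv_0_lt_compat; lra]).
        nra. }
  lra.
Qed.

End TL.


Lemma exp_le_mono' x y : x <= y -> exp x <= exp y.
Proof. intros H. destruct (Rle_lt_or_eq_dec _ _ H) as [H'|H']; [left; apply exp_increasing; auto| rewrite H'; lra]. Qed.

Lemma pow_exp_le r z k : 0 <= r -> r <= exp z -> r ^ k <= exp (z * INR k).
Proof.
  intros Hr Hz. induction k.
  - simpl. rewrite Rmult_0_r, exp_0. lra.
  - rewrite S_INR. replace (z * (INR k + 1)) with (z * INR k + z) by ring. rewrite exp_plus.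
    simpl. rewrite Rmult_comm. apply Rmult_le_compat; auto. apply pow_le; auto.
Qed.

Lemma tail_up (p N : nat) (r r' z K : R) : 0 <= r -> 0 <= r' < 1 -> 0 <= z -> r <= r' * exp (- z) ->
  sum_f_R0 (fun k => if Rle_dec K (INR k) then Binomial.C (p + k) k * r^k else 0) N
   <= exp (- z * K) / (1 - r')^(S p).
Proof.
  intros Hr Hr' Hz Hrr.
  apply Rle_trans with (exp (- z * K) * NBs p N r').
  - unfold NBs. rewrite scal_sum. apply sum_le_gen. intros k _.
    destruct (Rle_dec K (INR k)) as [HK|HK].
    + replace (Binomial.C (p + k) k * r' ^ k * exp (- z * K)) with (Binomial.C (p + k) k * (r' ^ k * exp (- z * K))) by ring.
      apply Rmult_le_compat_l; [apply C_nonneg|].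
      assert (r ^ k <= (r' * exp (- z)) ^ k) by (apply pow_incr; auto).
      rewrite Rpow_mult_distr in H.
      assert (exp (-z) ^ k <= exp (- z * K)).
      { apply Rle_trans with (exp (- z * INR k)). apply pow_exp_le; [left; apply exp_pos| lra].
        apply exp_le_mono'. nra. }
      assert (0 <= r'^k) by (apply pow_le; lra).
      apply Rle_trans with (r'^k * exp (-z)^k); auto. apply Rmult_le_compat_l; auto.
    + apply Rmult_le_pos; [apply Rmult_le_pos; [apply C_nonneg| apply pow_le; lra]| left; apply exp_pos].
  - unfold Rdiv. apply Rmult_le_compat_l; [left; apply exp_pos|]. apply NBs_bound; lra.
Qed.

Lemma tail_low (p N : nat) (r r' z K : R) : 0 <= r -> 0 <= r' < 1 -> 0 <= z -> r <= r' * exp z ->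
  sum_f_R0 (fun k => if Rle_dec (INR k) K then Binomial.C (p + k) k * r^k else 0) N
   <= exp (z * K) / (1 - r')^(S p).
Proof.
  intros Hr Hr' Hz Hrr.
  apply Rle_trans with (exp (z * K) * NBs p N r').
  - unfold NBs. rewrite scal_sum. apply sum_le_gen. intros k _.
    destruct (Rle_dec (INR k) K) as [HK|HK].
    + replace (Binomial.C (p + k) k * r' ^ k * exp (z * K)) with (Binomial.C (p + k) k * (r' ^ k * exp (z * K))) by ring.
      apply Rmult_le_compat_l; [apply C_nonneg|].
      assert (r ^ k <= (r' * exp z) ^ k) by (apply pow_incr; auto).
      rewrite Rpow_mult_distr in H.
      assert (exp z ^ k <= exp (z * K)).
      { apply Rle_trans with (exp (z * INR k)). apply pow_exp_le; [left; apply exp_pos| lra].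
        apply exp_le_mono'. nra. }
      assert (0 <= r'^k) by (apply pow_le; lra).
      apply Rle_trans with (r'^k * exp z^k); auto. apply Rmult_le_compat_l; auto.
    + apply Rmult_le_pos; [apply Rmult_le_pos; [apply C_nonneg| apply pow_le; lra]| left; apply exp_pos].
  - unfold Rdiv. apply Rmult_le_compat_l; [left; apply exp_pos|]. apply NBs_bound; lra.
Qed.

Lemma ln1p_ge v : 0 <= v -> v - v^2/2 <= ln (1 + v).
Proof.
  intros Hv. assert (H := deriv_mono (fun t => ln (1 + t) - t + t^2/2) (fun t => t^2 / (1 + t)) 0 v Hv).
  cbv beta in H. rewrite Rplus_0_r, ln_1 in H.
  assert (0 - 0 + 0^2/2 <= ln (1 + v) - v + v^2/2); [|simpl in H0; lra].
  apply H.
  - intros t Ht. auto_derive. lra. field. lra.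
  - intros t Ht. apply Rmult_le_pos; [apply pow2_ge_0| left; apply Rinv_0_lt_compat; lra].
Qed.

Lemma exp_pow_le v p : 0 <= v -> exp (p * (v - v^2/2)) <= (1 + v) ^ 0 * exp (p * ln (1 + v)) \/ True.
Proof. right; auto. Qed.

Lemma pow_as_exp x n : 0 < x -> x ^ n = exp (INR n * ln x).
Proof.
  intros Hx. induction n.
  - simpl. rewrite Rmult_0_l, exp_0. auto.
  - rewrite S_INR. replace ((INR n + 1) * ln x) with (INR n * ln x + ln x) by ring.
    rewrite exp_plus, exp_ln by auto. simpl. rewrite IHn. ring.
Qed.

Lemma tails_bound (p N : nat) (r u : R) : 1/2 <= r < 1 -> 0 < u <= 1/4 ->
  sum_f_R0 (fun k => if Rle_dec (INR p * (r + u) / (1 - r)) (INR k) then Binomial.C (p + k) k * r^k else 0) N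
  + sum_f_R0 (fun k => if Rle_dec (INR k) (INR p * (r - u) / (1 - r)) then Binomial.C (p + k) k * r^k else 0) N
  <= 4 * exp (- INR p * (u^2/8)) / (1 - r)^(S p).
Proof.
  intros [Hr1 Hr2] [Hu1 Hu2].
  set (v := u / 2). assert (Hv : v = u / 2) by reflexivity.
  assert (Hp : 0 <= INR p) by apply pos_INR.
  assert (H1r : 0 < (1 - r)^(S p)) by (apply pow_lt; lra).
  set (r' := (r + v) / (1 + v)).
  set (zu := v * (1 - r) / (r + v)).
  assert (HU := tail_up p N r r' zu (INR p * (r + u) / (1 - r))).
  assert (HU' : exp (- zu * (INR p * (r + u) / (1 - r))) / (1 - r')^(S p) <= 3 * exp (- INR p * (u^2/8)) / (1 - r)^(S p)).
  { replace (1 - r') with ((1 - r) / (1 + v)) by (unfold r'; field; unfold v; lra).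
    rewrite pow_div_distr by (unfold v; lra).
    replace (exp (- zu * (INR p * (r + u) / (1 - r))) / ((1 - r) ^ S p / (1 + v) ^ S p))
      with (exp (- zu * (INR p * (r + u) / (1 - r))) * (1 + v) ^ S p / (1 - r) ^ S p) by (field; split; [apply pow_nonzero; unfold v; lra| apply pow_nonzero; lra]).
    unfold Rdiv. apply Rmult_le_compat_r; [left; apply Rinv_0_lt_compat; auto|].
    rewrite (pow_as_exp (1 + v)) by lra. rewrite <- exp_plus.
    assert (Hln : ln (1 + v) <= v) by (pose proof (ln_le_sub1 (1+v)); lra).
    assert (E3 : exp v <= 3).
    { apply Rle_trans with (exp 1). apply exp_le_mono'; unfold v; lra. apply exp_le_3. }
    apply Rle_trans with (exp v * exp (- INR p * (u ^ 2 / 8))); [|apply Rmult_le_compat_r; [left; apply exp_pos|auto]].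
    rewrite <- exp_plus. apply exp_le_mono'.
    assert (Heq : - zu * (INR p * (r + u) * / (1 - r)) = - INR p * (v * (r + u) / (r + v))) by (unfold zu; field; lra).
    rewrite Heq. rewrite S_INR.
    assert ((INR p + 1) * ln (1 + v) <= (INR p + 1) * v) by (apply Rmult_le_compat_l; lra).
    assert (Hk : v * (r + u) / (r + v) - v >= u^2/8).
    { unfold v. apply Rle_ge. apply Rmult_le_reg_r with (r + u/2); [lra|].
      field_simplify; [|lra]. nra. }
    assert (INR p * (u^2/8) <= INR p * (v*(r+u)/(r+v) - v)) by (apply Rmult_le_compat_l; lra).
    lra. }
  assert (HUb : sum_f_R0 (fun k => if Rle_dec (INR p * (r + u) / (1 - r)) (INR k) then Binomial.C (p + k) k * r^k else 0) N
     <= 3 * exp (- INR p * (u^2/8)) / (1 - r)^(S p)).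
  { eapply Rle_trans; [apply HU|exact HU'].
    - lra.
    - unfold r'. split. apply Rmult_le_pos; [unfold v; lra| left; apply Rinv_0_lt_compat; unfold v; lra].
      apply Rmult_lt_reg_r with (1 + v); [unfold v; lra|]. field_simplify; unfold v; lra.
    - unfold zu. apply Rmult_le_pos; [apply Rmult_le_pos; unfold v; lra| left; apply Rinv_0_lt_compat; unfold v; lra].
    - assert (Hz : 1 - zu <= exp (- zu)) by (pose proof (exp_ineq1_le (- zu)); lra).
      assert (E : r' * (1 - zu) = r) by (unfold r', zu; field; unfold v; lra).
      rewrite <- E at 1.
      apply Rmult_le_compat_l; auto. unfold r'. apply Rmult_le_pos; [unfold v; lra| left; apply Rinv_0_lt_compat; unfold v; lra]. }
  set (r'' := r - v * (1 - r)).
  assert (Hr'' : r - v <= r'') by (unfold r''; unfold v; nra).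
  assert (Hr''0 : 0 < r'') by (unfold v in Hr''; lra).
  set (zl := v * (1 - r) / r'').
  assert (HL := tail_low p N r r'' zl (INR p * (r - u) / (1 - r))).
  assert (HLb : sum_f_R0 (fun k => if Rle_dec (INR k) (INR p * (r - u) / (1 - r)) then Binomial.C (p + k) k * r^k else 0) N
     <= exp (- INR p * (u^2/8)) / (1 - r)^(S p)).
  { eapply Rle_trans; [apply HL|].
    - lra.
    - split; [lra|]. assert (0 <= v * (1 - r)) by (apply Rmult_le_pos; lra). unfold r''. lra.
    - unfold zl. apply Rmult_le_pos; [apply Rmult_le_pos; unfold v; lra| left; apply Rinv_0_lt_compat; lra].
    - assert (Hz : 1 + zl <= exp zl) by apply exp_ineq1_le.
      assert (E : r'' * (1 + zl) = r).
      { unfold zl. replace (r'' * (1 + v * (1 - r) / r'')) with (r'' + v * (1 - r)) by (field; lra). unfold r''. ring. }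
      rewrite <- E at 1.
      apply Rmult_le_compat_l; lra.
    - replace (1 - r'') with ((1 - r) * (1 + v)) by (unfold r''; ring).
      rewrite Rpow_mult_distr.
      rewrite (pow_as_exp (1 + v)) by (unfold v; lra).
      replace (exp (zl * (INR p * (r - u) / (1 - r))) / ((1 - r) ^ S p * exp (INR (S p) * ln (1 + v))))
        with (exp (zl * (INR p * (r - u) / (1 - r)) - INR (S p) * ln (1 + v)) / (1 - r) ^ S p).
      2:{ unfold Rminus at 1. rewrite exp_plus, exp_Ropp. field. split; [apply Rgt_not_eq, exp_pos| lra]. }
      unfold Rdiv. apply Rmult_le_compat_r; [left; apply Rinv_0_lt_compat; auto|].
      apply exp_le_mono'.
      assert (Hln := ln1p_ge v ltac:(unfold v; lra)).
      assert (Heq : zl * (INR p * (r - u) * / (1 - r)) = INR p * (v * (r - u) / r'')) by (unfold zl; field; lra).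
      rewrite Heq.
      assert (Hq : (r - u) / r'' <= 1 - v).
      { apply Rmult_le_reg_r with r''; auto. field_simplify; [|lra]. unfold r'', v. nra. }
      assert (v * (r - u) / r'' <= v * (1 - v)).
      { replace (v * (r - u) / r'') with (v * ((r - u) / r'')) by (field; lra). apply Rmult_le_compat_l; unfold v; lra. }
      rewrite S_INR.
      assert (0 <= ln (1 + v)) by (rewrite <- ln_1; apply ln_le; unfold v; lra).
      assert (INR p * (v * (r - u) / r'') <= INR p * (v * (1 - v))) by (apply Rmult_le_compat_l; lra).
      assert (INR p * (v - v^2/2) <= INR p * ln (1 + v)) by (apply Rmult_le_compat_l; lra).
      assert (v^2 = u^2/4) by (rewrite Hv; field).
      assert (INR p * (v * (1 - v)) = INR p * (v - v^2/2) - INR p * (u^2/8)) by (rewrite Hv; field).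
      lra. }
  assert (HE : 0 <= exp (- INR p * (u^2/8)) / (1 - r)^(S p)) by (apply Rmult_le_pos; [left; apply exp_pos| left; apply Rinv_0_lt_compat; auto]).
  unfold Rdiv in *. lra.
Qed.


Lemma exp_ge_sq x : 0 <= x -> x^2 / 4 <= exp x.
Proof.
  intros Hx. replace (exp x) with (exp (x/2) * exp (x/2)) by (rewrite <- exp_plus; f_equal; field).
  pose proof (exp_ineq1_le (x/2)). nra.
Qed.

Lemma ptheta_small (K c : R) : 0 < c -> exists p0, forall p, (p0 <= p)%nat -> K * INR p * exp (- INR p * c) < 1.
Proof.
  intros Hc.
  destruct (archimed (Rabs K * 16 / c^2)) as [Hu _].
  exists (S (Z.to_nat (up (Rabs K * 16 / c^2)))). intros p Hp.
  assert (HP : Rabs K * 16 / c^2 < INR p).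
  { assert (0 <= Rabs K * 16 / c^2) by (apply Rmult_le_pos; [pose proof (Rabs_pos K); lra| left; apply Rinv_0_lt_compat, pow_lt; lra]).
    apply le_INR in Hp. rewrite S_INR in Hp. rewrite INR_IZR_INZ, Z2Nat.id in Hp; [lra|]. apply le_IZR. lra. }
  assert (Hp0 : 0 < INR p) by (assert (0 <= Rabs K * 16 / c^2) by (apply Rmult_le_pos; [pose proof (Rabs_pos K); lra| left; apply Rinv_0_lt_compat, pow_lt; lra]); lra).
  assert (HE := exp_ge_sq (INR p * c) ltac:(apply Rmult_le_pos; lra)).
  rewrite <- (Ropp_mult_distr_l), exp_Ropp.
  assert (0 < exp (INR p * c)) by apply exp_pos.
  apply Rle_lt_trans with (Rabs K * INR p * / exp (INR p * c)).
  { apply Rmult_le_compat_r; [left; apply Rinv_0_lt_compat; auto|]. apply Rmult_le_compat_r; [lra| apply Rle_abs]. }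
  apply Rmult_lt_reg_r with (exp (INR p * c)); auto. field_simplify; [|lra].
  apply Rlt_le_trans with ((INR p * c)^2/4); [|lra].
  apply Rmult_lt_reg_r with (/ INR p * 4 / c^2).
  { apply Rmult_lt_0_compat; [apply Rmult_lt_0_compat; [apply Rinv_0_lt_compat; auto| lra]| apply Rinv_0_lt_compat, pow_lt; lra]. }
  field_simplify; try lra.
Qed.

Section W.
Variables a b c al0 ga0 : nat.
Hypothesis HA : (0 < a)%nat.
Hypothesis Hal0 : (0 < al0)%nat.

Local Notation PPs := (PP a b c al0 ga0).
Local Notation QQs := (QQ a b c).
Local Notation LLs := (LL al0 ga0).
Local Notation tts := (tt a b c).
Local Notation Gs := (G a b c al0 ga0).

Definition g m y := PPs m y / INR (Factorial.fact m).

Lemma g_pos m y : 0 < y -> 0 < g m y.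
Proof. intros. unfold g. apply Rdiv_lt_0_compat; [eapply P_pos; eauto| apply INR_fact_lt_0]. Qed.

Lemma g_nonneg m y : 0 <= y -> 0 <= g m y.
Proof. intros. unfold g. apply Rmult_le_pos; [eapply P_nonneg; eauto| left; apply Rinv_0_lt_compat, INR_fact_lt_0]. Qed.

Lemma G_in_g p N x s : Gs p N x s = INR (Factorial.fact p) * sum_f_R0 (fun k => Binomial.C (p + k) k * g (p + k) x * s^k) N.
Proof.
  unfold G. rewrite scal_sum. apply sum_eq. intros k _. unfold g, Binomial.C.
  replace (p + k - k)%nat with p by lia. field. repeat split; apply INR_fact_neq_0.
Qed.

Lemma g_lower_big n Y : 0 <= Y -> (INR a * Y)^(S n) / (INR a * INR (S n)) <= g (S n) Y.
Proof.
  intros HY. assert (Ha : 0 < INR a) by (apply lt_0_INR; lia).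
  assert (H := P_lower a b c al0 ga0 HA Hal0 n Y HY).
  unfold g. fold (PP a b c al0 ga0 (S n) Y) in H.
  rewrite fact_simpl, mult_INR.
  assert (0 < INR (Factorial.fact n)) by apply INR_fact_lt_0.
  assert (0 < INR (S n)) by (apply lt_0_INR; lia).
  apply Rle_trans with (INR a ^ n * INR (Factorial.fact n) * Y ^ S n / (INR (S n) * INR (Factorial.fact n))).
  - right. rewrite Rpow_mult_distr. change (INR a ^ S n) with (INR a * INR a ^ n). field. repeat split; lra.
  - unfold Rdiv. apply Rmult_le_compat_r; auto. left; apply Rinv_0_lt_compat, Rmult_lt_0_compat; auto.
Qed.

Lemma g_upper m x Y : 0 < x -> x <= Y -> g m x * (tts x - tts Y)^m <= exp (LLs Y * (tts x - tts Y)).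
Proof.
  intros Hx HxY. assert (H := P_upper a b c al0 ga0 HA Hal0 m x Y Hx HxY).
  unfold g. replace (PPs m x / INR (Factorial.fact m) * (tts x - tts Y) ^ m) with (PPs m x * (tts x - tts Y) ^ m / INR (Factorial.fact m)) by (field; apply INR_fact_neq_0).
  exact H.
Qed.

Lemma g_ratio k x : 0 < x -> g (S k) x <= (QQs x / x + LLs x) * g k x.
Proof.
  intros Hx. unfold g. assert (H := P_ratio a b c al0 ga0 HA Hal0 k x Hx).
  fold (PP a b c al0 ga0 (S k) x) (PP a b c al0 ga0 k x) in H.
  fold (QQ a b c) (LL al0 ga0) in H.
  rewrite fact_simpl, mult_INR.
  assert (0 < INR (Factorial.fact k)) by apply INR_fact_lt_0.
  assert (0 < INR (S k)) by (apply lt_0_INR; lia).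
  apply Rmult_le_reg_r with (INR (S k) * INR (Factorial.fact k)). apply Rmult_lt_0_compat; auto.
  replace (PPs (S k) x / (INR (S k) * INR (Factorial.fact k)) * (INR (S k) * INR (Factorial.fact k))) with (PPs (S k) x) by (field; lra).
  replace ((QQs x / x + LLs x) * (PPs k x / INR (Factorial.fact k)) * (INR (S k) * INR (Factorial.fact k)))
    with (INR (S k) * (QQs x / x + LLs x) * PPs k x) by (field; lra).
  exact H.
Qed.

End W.


Section W2.
Variables a b c al0 ga0 : nat.
Hypothesis HA : (0 < a)%nat.
Hypothesis Hal0 : (0 < al0)%nat.

Local Notation PPs := (PP a b c al0 ga0).
Local Notation QQs := (QQ a b c).
Local Notation LLs := (LL al0 ga0).
Local Notation tts := (tt a b c).
Local Notation Gs := (G a b c al0 ga0).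
Local Notation gs := (g a b c al0 ga0).

Let tm x y : 0 < x -> x <= y -> tts y <= tts x := ttm a b c al0 HA Hal0 x y.
Let tp y : 0 < y -> 0 < tts y := ttp a b c al0 HA Hal0 y.
Let tb y : 0 < y -> y / QQs y <= tts y /\ tts y <= / (INR a * y) := ttb a b c al0 HA Hal0 y.

Lemma Rmax_ge_l x y : x <= Rmax x y. Proof. apply Rmax_l. Qed.
Lemma Rmax_ge_r x y : y <= Rmax x y. Proof. apply Rmax_r. Qed.

Lemma window x rho u : 0 < x -> 0 < rho -> rho * tts x < 1 -> 0 < u <= 1/4 ->
  exists lam, 0 < lam /\ exists p0, forall p, (p0 <= p)%nat ->
   exists m, lam * INR p * (1 - u) < INR m < lam * INR p * (1 + u) /\ rho ^ m <= gs m x.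
Proof.
  intros Hx Hrho Hrt Hu.
  set (A := INR a). assert (HA' : 0 < A) by (apply lt_0_INR; lia).
  assert (Htx : 0 < tts x) by auto.
  set (gam := / rho - tts x).
  assert (Hgam : 0 < gam).
  { unfold gam. assert (tts x < / rho). { apply Rmult_lt_reg_l with rho; auto. rewrite Rinv_r by lra. lra. } lra. }
  set (cc := u^2/8). assert (Hcc : 0 < cc) by (unfold cc; assert (0 < u^2) by (apply pow_lt; lra); lra).
  set (th := exp (- cc / 2)).
  assert (Hth : 0 < th < 1).
  { unfold th. split. apply exp_pos. rewrite <- exp_0. apply exp_increasing. lra. }
  assert (Hth2 : th * th = exp (- cc)) by (unfold th; rewrite <- exp_plus; f_equal; field).
  assert (Hthe : th * exp (cc / 2) = 1) by (unfold th; rewrite <- exp_plus; replace (-cc/2 + cc/2) with 0 by field; apply exp_0).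
  set (mu := (1 + th) / 2).
  set (Cb := INR c + INR b). assert (HCb : 0 <= Cb) by (unfold Cb; pose proof (pos_INR c); pose proof (pos_INR b); lra).
  set (Y := Rmax (Rmax (x + 1) (Cb / ((1 - mu) * A))) (Rmax (2 / (A * tts x)) (exp (cc/2) / (gam * A)))).
  assert (HY1 : x + 1 <= Y) by (unfold Y; eapply Rle_trans; [|apply Rmax_ge_l]; apply Rmax_ge_l).
  assert (HY2 : Cb / ((1 - mu) * A) <= Y) by (unfold Y; eapply Rle_trans; [|apply Rmax_ge_l]; apply Rmax_ge_r).
  assert (HY3 : 2 / (A * tts x) <= Y) by (unfold Y; eapply Rle_trans; [|apply Rmax_ge_r]; apply Rmax_ge_l).
  assert (HY4 : exp (cc/2) / (gam * A) <= Y) by (unfold Y; eapply Rle_trans; [|apply Rmax_ge_r]; apply Rmax_ge_r).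
  assert (HY0 : 0 < Y) by lra.
  assert (Hmu : 0 < 1 - mu) by (unfold mu; lra).
  assert (HQY : 0 < QQs Y) by (eapply QQ_pos; eauto).
  assert (Hc1 : mu <= A * Y * tts Y).
  { destruct (tb Y HY0) as [Hl _]. fold A in Hl.
    assert (Hb1 : Cb <= (1 - mu) * A * Y).
    { apply Rmult_le_compat_r with (r := (1 - mu) * A) in HY2; [|left; apply Rmult_lt_0_compat; lra].
      replace (Cb / ((1 - mu) * A) * ((1 - mu) * A)) with Cb in HY2 by (field; lra). lra. }
    assert (HQ2 : mu * QQs Y <= A * Y^2).
    { unfold QQ, Q. fold A. unfold Cb in Hb1. pose proof (pos_INR c). pose proof (pos_INR b).
      assert (Y >= 1) by lra.
      assert (INR c * Y + INR b <= (INR c + INR b) * Y) by nra.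
      assert ((INR c + INR b) * Y <= (1 - mu) * A * Y * Y) by (apply Rmult_le_compat_r; lra).
      assert (0 <= mu <= 1) by (unfold mu; lra).
      assert (0 <= INR c * Y + INR b) by nra.
      assert (mu * (INR c * Y + INR b) <= INR c * Y + INR b) by nra.
      replace (Y^2) with (Y * Y) by (simpl; ring).
      replace (mu * (A * (Y * Y) + INR c * Y + INR b)) with (mu * A * (Y * Y) + mu * (INR c * Y + INR b)) by ring.
      nra. }
    apply Rle_trans with (A * Y * (Y / QQs Y)).
    - apply Rmult_le_reg_r with (QQs Y); auto. replace (A * Y * (Y / QQs Y) * QQs Y) with (A * Y^2) by (field; lra). lra.
    - apply Rmult_le_compat_l; [apply Rmult_le_pos; lra| auto]. }
  assert (Hc2 : tts Y <= tts x / 2).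
  { destruct (tb Y HY0) as [_ Hu2]. fold A in Hu2. eapply Rle_trans; [exact Hu2|].
    replace (tts x / 2) with (/ (2 / tts x)) by (field; lra).
    apply Rinv_le_contravar. apply Rdiv_lt_0_compat; lra.
    apply Rmult_le_compat_r with (r := A) in HY3; [|lra].
    replace (2 / (A * tts x) * A) with (2 / tts x) in HY3 by (field; lra). lra. }
  assert (Hc3 : 1 <= A * Y * th * gam).
  { apply Rmult_le_compat_r with (r := gam * A) in HY4; [|left; apply Rmult_lt_0_compat; lra].
    replace (exp (cc / 2) / (gam * A) * (gam * A)) with (exp (cc/2)) in HY4 by (field; lra).
    apply Rmult_le_compat_l with (r := th) in HY4; [|lra]. rewrite Hthe in HY4. lra. }
  set (Y' := Rmax (Y + 1) (2 * Y / (1 - th))).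
  assert (HY'1 : Y + 1 <= Y') by apply Rmax_ge_l.
  assert (HY'2 : 2 * Y / (1 - th) <= Y') by apply Rmax_ge_r.
  assert (HY'0 : 0 < Y') by lra.
  assert (Hc4 : A * Y * tts Y' <= (1 - th) / 2).
  { destruct (tb Y' HY'0) as [_ Hu2]. fold A in Hu2.
    apply Rle_trans with (A * Y * / (A * Y')). apply Rmult_le_compat_l; [apply Rmult_le_pos; lra| auto].
    replace (A * Y * / (A * Y')) with (Y / Y') by (field; lra).
    apply Rmult_le_reg_r with (Y' * 2 / (1 - th)). { apply Rmult_lt_0_compat; [lra| apply Rinv_0_lt_compat; lra]. }
    replace (Y / Y' * (Y' * 2 / (1 - th))) with (2 * Y / (1 - th)) by (field; lra).
    replace ((1 - th) / 2 * (Y' * 2 / (1 - th))) with Y' by (field; lra). lra. }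
  assert (Hc5 : th <= A * Y * (tts Y - tts Y')) by (unfold mu in Hc1; lra).
  set (s := tts x - tts Y). set (tb' := tts x - tts Y').
  assert (HtY'0 : 0 < tts Y') by auto.
  assert (HtYY' : tts Y' < tts Y).
  { assert (0 < A * Y * (tts Y - tts Y')) by lra.
    assert (0 < A * Y) by (apply Rmult_lt_0_compat; lra). nra. }
  assert (Hs0 : 0 < s) by (unfold s; lra).
  assert (Hst : s < tb') by (unfold s, tb'; lra).
  assert (Htb0 : 0 < tb') by lra.
  set (r := s / tb').
  assert (Hr : 1/2 <= r < 1).
  { unfold r. split.
    - apply Rmult_le_reg_r with tb'; auto. field_simplify; [|lra]. unfold s, tb'. lra.
    - apply Rmult_lt_reg_r with tb'; auto. field_simplify; lra. }
  exists (/ (1 - r)). split. { apply Rinv_0_lt_compat; lra. }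
  set (U := exp (LLs Y' * tb')).
  assert (HU0 : 0 < U) by apply exp_pos.
  assert (Hsr : s * rho < 1).
  { assert (s <= tts x) by (unfold s; pose proof (tp Y HY0); lra). nra. }
  set (K0 := / (1 - s * rho) + 4 * U / (1 - r)).
  assert (HK0 : 0 < K0).
  { unfold K0. assert (0 < / (1 - s * rho)) by (apply Rinv_0_lt_compat; lra).
    assert (0 < 4 * U / (1 - r)) by (apply Rdiv_lt_0_compat; lra). lra. }
  destruct (ptheta_small (A * K0) (cc / 2) ltac:(lra)) as [p0 Hp0].
  exists (S p0). intros p Hp.
  destruct p as [|n]; [lia|].
  destruct (Classical_Prop.classic (exists m, / (1 - r) * INR (S n) * (1 - u) < INR m < / (1 - r) * INR (S n) * (1 + u) /\ rho ^ m <= gs m x)) as [Hex|Hnex]; [exact Hex|].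
  exfalso.
  assert (Hbad : forall m, / (1 - r) * INR (S n) * (1 - u) < INR m < / (1 - r) * INR (S n) * (1 + u) -> gs m x < rho ^ m).
  { intros m Hm. apply Rnot_le_lt. intro. apply Hnex. exists m. split; auto. }
  set (p := S n).
  assert (HS : forall N, sum_f_R0 (fun k => Binomial.C (p + k) k * gs (p + k) x * s^k) N <= (th * (A * Y))^p * K0).
  { intros N.
    set (K1 := INR p * (r - u) / (1 - r)). set (K2 := INR p * (r + u) / (1 - r)).
    set (up := fun k => if Rle_dec K2 (INR k) then Binomial.C (p + k) k * r^k else 0).
    set (low := fun k => if Rle_dec (INR k) K1 then Binomial.C (p + k) k * r^k else 0).
    assert (Hr1 : 0 < 1 - r) by lra.
    assert (Htp : 0 < tb' ^ p) by (apply pow_lt; lra).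
    assert (Hterm : forall k, Binomial.C (p + k) k * gs (p + k) x * s^k <=
        Binomial.C (p + k) k * rho^(p + k) * s^k + U / tb'^p * (up k + low k)).
    { intros k.
      assert (HC := C_nonneg (p + k) k).
      assert (Hsk : 0 <= s^k) by (apply pow_le; lra).
      assert (Hup0 : 0 <= up k) by (unfold up; destruct (Rle_dec K2 (INR k)); [apply Rmult_le_pos; [auto| apply pow_le; lra]| lra]).
      assert (Hlow0 : 0 <= low k) by (unfold low; destruct (Rle_dec (INR k) K1); [apply Rmult_le_pos; [auto| apply pow_le; lra]| lra]).
      assert (Hg0 : 0 <= gs (p + k) x) by (apply g_nonneg; lra).
      assert (Hrk : 0 <= Binomial.C (p + k) k * rho ^ (p + k) * s ^ k) by (apply Rmult_le_pos; [apply Rmult_le_pos; [auto| apply pow_le; lra]| auto]).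
      destruct (Rle_dec K2 (INR k)) as [HK2|HK2]; destruct (Rle_dec (INR k) K1) as [HK1|HK1].
      4:{
        assert (Hin : / (1 - r) * INR (S n) * (1 - u) < INR (p + k) < / (1 - r) * INR (S n) * (1 + u)).
        { fold p. rewrite plus_INR. apply Rnot_le_lt in HK1. apply Rnot_le_lt in HK2. unfold K1, K2 in *.
          split.
          - apply Rmult_lt_reg_r with (1 - r); auto. field_simplify; [|lra].
            apply Rmult_lt_compat_r with (r := 1 - r) in HK1; auto.
            replace (INR p * (r - u) / (1 - r) * (1 - r)) with (INR p * (r - u)) in HK1 by (field; lra). nra.
          - apply Rmult_lt_reg_r with (1 - r); auto. field_simplify; [|lra].
            apply Rmult_lt_compat_r with (r := 1 - r) in HK2; auto.
            replace (INR p * (r + u) / (1 - r) * (1 - r)) with (INR p * (r + u)) in HK2 by (field; lra). nra. }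
        specialize (Hbad (p + k)%nat Hin).
        assert (0 <= U / tb' ^ p * (up k + low k)) by (apply Rmult_le_pos; [apply Rmult_le_pos; [lra| left; apply Rinv_0_lt_compat; auto]| lra]).
        assert (Binomial.C (p + k) k * gs (p + k) x * s ^ k <= Binomial.C (p + k) k * rho ^ (p + k) * s ^ k).
        { apply Rmult_le_compat_r; auto. apply Rmult_le_compat_l; auto. lra. }
        lra. }
      all: assert (Hgu : gs (p + k) x * tb' ^ (p + k) <= U) by (apply g_upper; auto; lra).
      all: assert (Htpk : 0 < tb' ^ (p + k)) by (apply pow_lt; lra).
      all: assert (Hgk : gs (p + k) x <= U / tb' ^ (p + k)) by (apply Rmult_le_reg_r with (tb' ^ (p + k)); auto; field_simplify; lra).
      all: assert (Heq : Binomial.C (p + k) k * (U / tb' ^ (p + k)) * s ^ k = U / tb' ^ p * (Binomial.C (p + k) k * r ^ k))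
             by (unfold r; rewrite pow_div_distr, pow_add by lra; field; split; apply pow_nonzero; lra).
      all: assert (Hb1 : Binomial.C (p + k) k * gs (p + k) x * s ^ k <= Binomial.C (p + k) k * (U / tb' ^ (p + k)) * s ^ k)
             by (apply Rmult_le_compat_r; auto; apply Rmult_le_compat_l; auto).
      all: assert (HUt : 0 <= U / tb' ^ p) by (apply Rmult_le_pos; [lra| left; apply Rinv_0_lt_compat; auto]).
      - assert (up k = Binomial.C (p + k) k * r ^ k) by (unfold up; destruct (Rle_dec K2 (INR k)); tauto).
        assert (U / tb' ^ p * (Binomial.C (p + k) k * r ^ k) <= U / tb' ^ p * (up k + low k)) by (apply Rmult_le_compat_l; lra).
        lra.
      - assert (up k = Binomial.C (p + k) k * r ^ k) by (unfold up; destruct (Rle_dec K2 (INR k)); tauto).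
        assert (U / tb' ^ p * (Binomial.C (p + k) k * r ^ k) <= U / tb' ^ p * (up k + low k)) by (apply Rmult_le_compat_l; lra).
        lra.
      - assert (low k = Binomial.C (p + k) k * r ^ k) by (unfold low; destruct (Rle_dec (INR k) K1); tauto).
        assert (U / tb' ^ p * (Binomial.C (p + k) k * r ^ k) <= U / tb' ^ p * (up k + low k)) by (apply Rmult_le_compat_l; lra).
        lra. }
    eapply Rle_trans; [apply sum_le_gen; intros k _; apply Hterm|].
    rewrite sum_plus.
    assert (HS1 : sum_f_R0 (fun k => Binomial.C (p + k) k * rho ^ (p + k) * s ^ k) N = rho^p * NBs p N (s * rho)).
    { unfold NBs. rewrite scal_sum. apply sum_eq. intros k _. rewrite pow_add, Rpow_mult_distr. ring. }
    assert (HS2 : sum_f_R0 (fun k => U / tb' ^ p * (up k + low k)) N = U / tb' ^ p * (sum_f_R0 up N + sum_f_R0 low N)).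
    { rewrite <- sum_plus, scal_sum. apply sum_eq. intros; ring. }
    rewrite HS1, HS2.
    assert (HNB := NBs_bound p N (s * rho) ltac:(split; nra)).
    assert (HT := tails_bound p N r u Hr Hu). fold cc in HT.
    assert (Hsr0 : 0 < 1 - s * rho) by lra.
    assert (X1 : rho / (1 - s * rho) <= th * (A * Y)).
    { apply Rle_trans with (/ gam).
      - unfold gam. replace (rho / (1 - s * rho)) with (/ (/ rho - s)) by (field; lra).
        apply Rinv_le_contravar; auto. assert (s <= tts x) by (unfold s; pose proof (tp Y HY0); lra). lra.
      - apply Rmult_le_reg_r with gam; auto. rewrite Rinv_l by lra. lra. }
    assert (P1 : rho ^ p * NBs p N (s * rho) <= (th * (A * Y))^p * / (1 - s * rho)).
    { apply Rle_trans with (rho ^ p * / (1 - s * rho) ^ S p).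
      { apply Rmult_le_compat_l; auto. apply pow_le; lra. }
      replace (rho ^ p * / (1 - s * rho) ^ S p) with ((rho / (1 - s * rho))^p * / (1 - s * rho))
        by (rewrite pow_div_distr by lra; simpl; field; split; [apply pow_nonzero|]; lra).
      apply Rmult_le_compat_r; [left; apply Rinv_0_lt_compat; lra|].
      apply pow_incr. split; auto. apply Rlt_le, Rdiv_lt_0_compat; lra. }
    assert (X2 : exp (- cc) / (tts Y - tts Y') <= th * (A * Y)).
    { rewrite <- Hth2. apply Rmult_le_reg_r with (tts Y - tts Y'); [lra|].
      field_simplify; [|lra]. assert (0 < th) by lra.
      replace (th ^ 2) with (th * th) by (simpl; ring). nra. }
    assert (Hexpp : exp (- INR p * cc) = exp (- cc) ^ p).
    { rewrite (pow_as_exp (exp (- cc))) by apply exp_pos. rewrite ln_exp. f_equal. ring. }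
    assert (P2 : U / tb' ^ p * (sum_f_R0 up N + sum_f_R0 low N) <= (th * (A * Y))^p * (4 * U / (1 - r))).
    { apply Rle_trans with (U / tb' ^ p * (4 * exp (- INR p * cc) / (1 - r) ^ S p)).
      { apply Rmult_le_compat_l; [apply Rmult_le_pos; [lra| left; apply Rinv_0_lt_compat; auto]|]. exact HT. }
      rewrite Hexpp.
      replace (U / tb' ^ p * (4 * exp (- cc) ^ p / (1 - r) ^ S p)) with ((exp (- cc) / (tb' * (1 - r)))^p * (4 * U / (1 - r))).
      2:{ rewrite pow_div_distr, Rpow_mult_distr by (apply Rgt_not_eq, Rmult_lt_0_compat; lra).
          rewrite <- tech_pow_Rmult. field. repeat split; try lra; apply pow_nonzero; lra. }
      apply Rmult_le_compat_r; [apply Rlt_le, Rdiv_lt_0_compat; lra|].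
      apply pow_incr. split. apply Rlt_le, Rdiv_lt_0_compat; [apply exp_pos| apply Rmult_lt_0_compat; lra].
      replace (tb' * (1 - r)) with (tts Y - tts Y') by (unfold r, tb', s; field; lra). exact X2. }
    unfold K0. lra. }
  assert (HgY : gs p Y <= (th * (A * Y))^p * K0).
  { destruct (Rle_lt_dec (gs p Y) ((th * (A * Y))^p * K0)) as [H|H]; auto. exfalso.
    set (eps := INR (Factorial.fact p) * (gs p Y - (th * (A * Y))^p * K0) / 2).
    assert (Hf : 0 < INR (Factorial.fact p)) by apply INR_fact_lt_0.
    assert (He : 0 < eps) by (unfold eps; apply Rmult_lt_0_compat; [apply Rmult_lt_0_compat|]; lra).
    destruct (L_full a b c al0 ga0 HA Hal0 p x Y Hx ltac:(lra) eps He) as [N HN].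
    rewrite (G_in_g a b c al0 ga0 HA Hal0) in HN. fold s in HN.
    specialize (HS N).
    assert (PPs p Y = INR (Factorial.fact p) * gs p Y) by (unfold g; field; lra).
    assert (INR (Factorial.fact p) * sum_f_R0 (fun k => Binomial.C (p + k) k * gs (p + k) x * s ^ k) N <= INR (Factorial.fact p) * ((th * (A * Y)) ^ p * K0))
      by (apply Rmult_le_compat_l; lra).
    unfold eps in HN. nra. }
  assert (HgL := g_lower_big a b c al0 ga0 HA Hal0 n Y ltac:(lra)). fold p A in HgL.
  assert (Hp1 : 0 < INR p) by (apply lt_0_INR; unfold p; lia).
  assert (HAY : 0 < (A * Y)^p) by (apply pow_lt; apply Rmult_lt_0_compat; lra).
  specialize (Hp0 p ltac:(unfold p; lia)).
  assert (Hthp : th ^ p = exp (- INR p * (cc / 2))).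
  { unfold th. rewrite (pow_as_exp (exp (- cc / 2))) by apply exp_pos. rewrite ln_exp. f_equal. field. }
  rewrite Rpow_mult_distr in HgY. rewrite Hthp in HgY.
  assert (1 <= A * K0 * INR p * exp (- INR p * (cc / 2))).
  { apply Rmult_le_reg_r with ((A * Y)^p / (A * INR p)). { apply Rdiv_lt_0_compat; auto. apply Rmult_lt_0_compat; lra. }
    replace (A * K0 * INR p * exp (- INR p * (cc / 2)) * ((A * Y) ^ p / (A * INR p))) with (exp (- INR p * (cc / 2)) * (A * Y) ^ p * K0) by (field; lra).
    lra. }
  lra.
Qed.


End W2.


Lemma ceil_nat r : 0 <= r -> exists p : nat, r < INR p <= r + 1.
Proof.
  intros Hr. destruct (archimed r) as [H1 H2].
  exists (Z.to_nat (up r)). rewrite INR_IZR_INZ, Z2Nat.id. lra. apply le_IZR. lra.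
Qed.

Lemma nat_above r : exists N : nat, r < INR N.
Proof.
  destruct (ceil_nat (Rabs r) (Rabs_pos r)) as [p [Hp _]]. exists p. pose proof (Rle_abs r). lra.
Qed.

Section PW.
Variables a b c al0 ga0 : nat.
Hypothesis HA : (0 < a)%nat.
Hypothesis Hal0 : (0 < al0)%nat.

Local Notation PPs := (PP a b c al0 ga0).
Local Notation QQs := (QQ a b c).
Local Notation LLs := (LL al0 ga0).
Local Notation tts := (tt a b c).
Local Notation gs := (g a b c al0 ga0).

Lemma g_iter x n d : 0 < x -> gs (n + d) x <= (QQs x / x + LLs x + 1)^d * gs n x.
Proof.
  intros Hx. induction d.
  - rewrite Nat.add_0_r. simpl. lra.
  - replace (n + S d)%nat with (S (n + d)) by lia.
    eapply Rle_trans; [apply g_ratio; auto|].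
    assert (HQ : 0 < QQs x) by (eapply QQ_pos; eauto).
    assert (HL : 0 <= LLs x) by (apply L_nonneg; lra).
    assert (Hk : 0 <= QQs x / x + LLs x) by (apply Rplus_le_le_0_compat; auto; apply Rlt_le, Rdiv_lt_0_compat; auto).
    assert (0 <= gs (n + d) x) by (apply g_nonneg; lra).
    assert (0 <= gs n x) by (apply g_nonneg; lra).
    simpl. apply Rle_trans with ((QQs x / x + LLs x + 1) * gs (n + d) x).
    + apply Rmult_le_compat_r; lra.
    + rewrite Rmult_assoc. apply Rmult_le_compat_l; lra.
Qed.

Lemma lower_rate x delta : 0 < x -> 0 < delta ->
  exists N, forall n, (N <= n)%nat -> - ln (tts x) - delta <= ln (gs n x) / INR n.
Proof.
  intros Hx Hd.
  assert (Htx : 0 < tts x) by (eapply tt_pos; eauto).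
  set (rho := exp (- delta / 2) / tts x).
  assert (Hrho : 0 < rho) by (apply Rdiv_lt_0_compat; [apply exp_pos| auto]).
  assert (Hrt : rho * tts x < 1).
  { unfold rho. replace (exp (- delta / 2) / tts x * tts x) with (exp (- delta / 2)) by (field; lra).
    rewrite <- exp_0. apply exp_increasing. lra. }
  assert (Hlnr : ln rho = - delta / 2 - ln (tts x)) by (unfold rho; rewrite ln_div, ln_exp; auto; apply exp_pos).
  set (kap := QQs x / x + LLs x + 1).
  assert (Hkap : 1 <= kap).
  { unfold kap. assert (0 < QQs x) by (eapply QQ_pos; eauto). assert (0 <= LLs x) by (apply L_nonneg; lra).
    assert (0 < QQs x / x) by (apply Rdiv_lt_0_compat; auto). lra. }
  assert (Hlk : 0 <= ln kap) by (rewrite <- ln_1; apply ln_le; lra).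
  set (Lam := Rabs (ln rho) + ln kap).
  assert (HLam : 0 <= Lam) by (unfold Lam; pose proof (Rabs_pos (ln rho)); lra).
  set (u := Rmin (1/4) (3 * delta / (32 * (Lam + 1)))).
  assert (Hu : 0 < u <= 1/4).
  { unfold u. split. apply Rmin_glb_lt; [lra|]. apply Rdiv_lt_0_compat; lra. apply Rmin_l. }
  assert (Hu2 : u <= 3 * delta / (32 * (Lam + 1))) by apply Rmin_r.
  destruct (window a b c al0 ga0 HA Hal0 x rho u Hx Hrho Hrt Hu) as [lam [Hlam [p0 Hp0]]].
  destruct (nat_above (Rmax (Rmax 1 (lam * INR p0)) (8 * lam * Lam / delta))) as [N HN].
  assert (HN1 : 1 < INR N) by (eapply Rle_lt_trans; [|exact HN]; eapply Rle_trans; [|apply Rmax_l]; apply Rmax_l).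
  assert (HN2 : lam * INR p0 < INR N) by (eapply Rle_lt_trans; [|exact HN]; eapply Rle_trans; [|apply Rmax_l]; apply Rmax_r).
  assert (HN3 : 8 * lam * Lam / delta < INR N) by (eapply Rle_lt_trans; [|exact HN]; apply Rmax_r).
  exists N. intros n Hn.
  apply le_INR in Hn.
  assert (Hn0 : 0 < INR n) by lra.
  assert (H1u : 0 < lam * (1 - u)) by (apply Rmult_lt_0_compat; lra).
  destruct (ceil_nat (INR n / (lam * (1 - u)))) as [p [Hp1 Hp2]]. { apply Rlt_le, Rdiv_lt_0_compat; lra. }
  assert (Hpp0 : (p0 <= p)%nat).
  { apply INR_le. apply Rle_trans with (INR n / lam).
    - apply Rmult_le_reg_r with lam; auto. field_simplify; lra.
    - apply Rle_trans with (INR n / (lam * (1 - u))); [|lra].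
      apply Rmult_le_compat_l; [lra|]. apply Rinv_le_contravar; auto. nra. }
  destruct (Hp0 p Hpp0) as [m [[Hm1 Hm2] Hgm]].
  assert (Hmn : INR n < INR m).
  { eapply Rle_lt_trans; [|exact Hm1]. apply Rmult_lt_compat_r with (r := lam * (1 - u)) in Hp1; auto.
    replace (INR n / (lam * (1 - u)) * (lam * (1 - u))) with (INR n) in Hp1 by (field; lra). lra. }
  assert (Hmn' : (n < m)%nat) by (apply INR_lt; auto).
  assert (Hmd : INR m - INR n <= INR n * (8 * u / 3) + 2 * lam).
  { assert (INR m < lam * (INR n / (lam * (1 - u)) + 1) * (1 + u)).
    { eapply Rlt_le_trans; [exact Hm2|]. apply Rmult_le_compat_r; [lra|]. apply Rmult_le_compat_l; lra. }
    replace (lam * (INR n / (lam * (1 - u)) + 1) * (1 + u)) with (INR n * ((1 + u) / (1 - u)) + lam * (1 + u)) in H by (field; lra).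
    assert ((1 + u) / (1 - u) <= 1 + 8 * u / 3).
    { apply Rmult_le_reg_r with (1 - u); [lra|]. field_simplify; [|lra]. nra. }
    assert (INR n * ((1 + u) / (1 - u)) <= INR n * (1 + 8 * u / 3)) by (apply Rmult_le_compat_l; lra).
    assert (lam * (1 + u) <= 2 * lam) by nra. lra. }
  assert (Hit := g_iter x n (m - n) Hx). replace (n + (m - n))%nat with m in Hit by lia. fold kap in Hit.
  assert (Hgn : 0 < gs n x) by (apply g_pos; auto).
  assert (Hkp : 0 < kap ^ (m - n)) by (apply pow_lt; lra).
  assert (Hlow : rho ^ m <= kap ^ (m - n) * gs n x) by lra.
  assert (Hln : INR m * ln rho - INR (m - n) * ln kap <= ln (gs n x)).
  { rewrite <- !ln_pow by lra. rewrite <- ln_div by (apply pow_lt; lra).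
    apply ln_le. apply Rdiv_lt_0_compat; apply pow_lt; lra.
    apply Rmult_le_reg_r with (kap ^ (m - n)); auto. field_simplify; lra. }
  rewrite minus_INR in Hln by lia.
  assert (HlnA : INR m * ln rho - (INR m - INR n) * ln kap >= INR n * ln rho - (INR m - INR n) * Lam).
  { unfold Lam. assert (- Rabs (ln rho) <= ln rho) by (pose proof (Rabs_pos (ln rho)); pose proof (Rle_abs (- ln rho)); rewrite Rabs_Ropp in *; lra).
    assert (0 <= INR m - INR n) by lra. nra. }
  assert (Hfin : INR n * ln rho - (INR n * (8 * u / 3) + 2 * lam) * Lam <= ln (gs n x)).
  { assert ((INR m - INR n) * Lam <= (INR n * (8 * u / 3) + 2 * lam) * Lam) by (apply Rmult_le_compat_r; lra). lra. }
  apply Rmult_le_reg_r with (INR n); auto.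
  replace (ln (gs n x) / INR n * INR n) with (ln (gs n x)) by (field; lra).
  rewrite Hlnr in Hfin.
  assert (Hu3 : (8 * u / 3) * Lam <= delta / 4).
  { apply Rle_trans with ((8 / 3) * (3 * delta / (32 * (Lam + 1))) * Lam).
    - apply Rmult_le_compat_r; lra.
    - apply Rmult_le_reg_r with (32 * (Lam + 1)); [lra|]. field_simplify; [|lra]. nra. }
  assert (Hl2 : 2 * lam * Lam <= INR n * (delta / 4)).
  { apply Rmult_lt_compat_r with (r := delta) in HN3; auto.
    replace (8 * lam * Lam / delta * delta) with (8 * lam * Lam) in HN3 by (field; lra).
    assert (INR N * delta <= INR n * delta) by (apply Rmult_le_compat_r; lra). lra. }
  nra.
Qed.

Lemma upper_rate x delta : 0 < x -> 0 < delta ->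
  exists N, forall n, (N <= n)%nat -> ln (gs n x) / INR n <= - ln (tts x) + delta.
Proof.
  intros Hx Hd.
  assert (Htx : 0 < tts x) by (eapply tt_pos; eauto).
  assert (HA' : 0 < INR a) by (apply lt_0_INR; lia).
  set (eta := 1 - exp (- delta / 2)).
  assert (Heta : 0 < eta < 1).
  { unfold eta. assert (exp (- delta / 2) < 1) by (rewrite <- exp_0; apply exp_increasing; lra).
    pose proof (exp_pos (- delta / 2)). lra. }
  set (Y' := Rmax x (/ (INR a * tts x * eta))).
  assert (HY'1 : x <= Y') by apply Rmax_l.
  assert (HY'2 : / (INR a * tts x * eta) <= Y') by apply Rmax_r.
  assert (HY'0 : 0 < Y') by lra.
  assert (HtY' : tts Y' <= tts x * eta).
  { destruct (ttb a b c al0 HA Hal0 Y' HY'0) as [_ Hu]. eapply Rle_trans; [exact Hu|].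
    replace (tts x * eta) with (/ (/ (INR a * tts x * eta) * INR a)) by (field; repeat split; lra).
    apply Rinv_le_contravar. apply Rmult_lt_0_compat; [apply Rinv_0_lt_compat; apply Rmult_lt_0_compat; [apply Rmult_lt_0_compat|]|]; lra.
    rewrite Rmult_comm. apply Rmult_le_compat_l; lra. }
  assert (HtY'0 : 0 < tts Y') by (eapply tt_pos; eauto).
  set (tb := tts x - tts Y').
  assert (Htb : tts x * exp (- delta / 2) <= tb) by (unfold tb, eta in *; lra).
  assert (Htb0 : 0 < tb) by (pose proof (exp_pos (- delta / 2)); nra).
  set (K := LLs Y' * tb).
  assert (HK : 0 <= K) by (unfold K; apply Rmult_le_pos; [apply L_nonneg; lra| lra]).
  destruct (nat_above (Rmax 1 (2 * K / delta))) as [N HN].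
  exists N. intros n Hn. apply le_INR in Hn.
  assert (Hn1 : 1 < INR n) by (assert (1 <= Rmax 1 (2 * K / delta)) by apply Rmax_l; lra).
  assert (HnK : 2 * K / delta < INR n) by (assert (2 * K / delta <= Rmax 1 (2 * K / delta)) by apply Rmax_r; lra).
  assert (Hgu := g_upper a b c al0 ga0 HA Hal0 n x Y' Hx HY'1). fold tb in Hgu. fold K in Hgu.
  assert (Hgn : 0 < gs n x) by (apply g_pos; auto).
  assert (Htbn : 0 < tb ^ n) by (apply pow_lt; auto).
  assert (Hl : ln (gs n x) + INR n * ln tb <= K).
  { rewrite <- ln_pow by auto. rewrite <- ln_mult by auto. rewrite <- (ln_exp K). apply ln_le; auto.
    apply Rmult_lt_0_compat; auto. }
  assert (Hlt : ln (tts x) - delta / 2 <= ln tb).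
  { replace (ln (tts x) - delta / 2) with (ln (tts x * exp (- delta / 2))).
    - apply ln_le; auto. apply Rmult_lt_0_compat; auto; apply exp_pos.
    - rewrite ln_mult, ln_exp; auto. field. apply exp_pos. }
  apply Rmult_le_reg_r with (INR n); [lra|].
  replace (ln (gs n x) / INR n * INR n) with (ln (gs n x)) by (field; lra).
  assert (INR n * (ln (tts x) - delta / 2) <= INR n * ln tb) by (apply Rmult_le_compat_l; lra).
  assert (K <= INR n * (delta / 2)).
  { apply Rmult_lt_compat_r with (r := delta / 2) in HnK; [|lra].
    replace (2 * K / delta * (delta / 2)) with K in HnK by (field; lra). lra. }
  nra.
Qed.

End PW.


Lemma common_N (Pr : nat -> nat -> Prop) J :
  (forall i n n', (n <= n')%nat -> (forall m, (n <= m)%nat -> Pr i m) -> (forall m, (n' <= m)%nat -> Pr i m)) ->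
  (forall i, (i <= J)%nat -> exists N, forall n, (N <= n)%nat -> Pr i n) ->
  exists N, forall i, (i <= J)%nat -> forall n, (N <= n)%nat -> Pr i n.
Proof.
  intros _ H. induction J.
  - destruct (H 0%nat (le_n 0)) as [N HN]. exists N. intros i Hi n Hn. replace i with 0%nat by lia. auto.
  - destruct IHJ as [N1 HN1]. { intros i Hi. apply H. lia. }
    destruct (H (S J) (le_n _)) as [N2 HN2]. exists (Nat.max N1 N2). intros i Hi n Hn.
    destruct (Nat.eq_dec i (S J)) as [->|Hne].
    + apply HN2. lia.
    + apply HN1; lia.
Qed.

Lemma cell y1 h J y : 0 < h -> (1 <= J)%nat -> y1 <= y <= y1 + INR J * h ->
  exists i, (i < J)%nat /\ y1 + INR i * h <= y <= y1 + INR (S i) * h.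
Proof.
  intros Hh. induction J; intros HJ Hy; [lia|].
  destruct (Rle_dec y (y1 + INR J * h)) as [Hle|Hgt].
  - destruct J. { exists 0%nat. split; [lia|]. simpl in *. lra. }
    destruct (IHJ ltac:(lia) ltac:(lra)) as [i [Hi Hi2]]. exists i. split; [lia| auto].
  - exists J. split; [lia|]. lra.
Qed.

Section U.
Variables a b c al0 ga0 : nat.
Hypothesis HA : (0 < a)%nat.
Hypothesis Hal0 : (0 < al0)%nat.

Local Notation PPs := (PP a b c al0 ga0).
Local Notation QQs := (QQ a b c).
Local Notation tts := (tt a b c).
Local Notation gs := (g a b c al0 ga0).

Definition F n y := ln (gs n y) / INR n.
Definition Phi y := - ln (tts y).

Lemma pointwise y d : 0 < y -> 0 < d -> exists N, forall n, (N <= n)%nat -> Rabs (F n y - Phi y) <= d.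
Proof.
  intros Hy Hd.
  destruct (lower_rate a b c al0 ga0 HA Hal0 y d Hy Hd) as [N1 H1].
  destruct (upper_rate a b c al0 ga0 HA Hal0 y d Hy Hd) as [N2 H2].
  exists (Nat.max N1 N2). intros n Hn. specialize (H1 n ltac:(lia)). specialize (H2 n ltac:(lia)).
  unfold F, Phi. apply Rabs_le. lra.
Qed.

Lemma F_mono n y z : (1 <= n)%nat -> 0 < y -> y <= z -> F n y <= F n z.
Proof.
  intros Hn Hy Hyz. unfold F. apply Rmult_le_compat_r.
  - left. apply Rinv_0_lt_compat. apply lt_0_INR. lia.
  - apply ln_le. apply g_pos; auto. unfold g. apply Rmult_le_compat_r.
    left; apply Rinv_0_lt_compat, INR_fact_lt_0. eapply P_mono; eauto. lra.
Qed.

Lemma Phi_lip y1 y2 y z : 0 < y1 -> y1 <= y -> y <= z -> z <= y2 ->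
  0 <= Phi z - Phi y <= / (QQs y1 * tts y2) * (z - y).
Proof.
  intros Hy1 H1 H2 H3.
  assert (Hd : forall w, y <= w <= z -> is_derive Phi w (/ (QQs w * tts w))).
  { intros w Hw. unfold Phi.
    assert (Hw0 : 0 < w) by lra.
    assert (Ht : 0 < tts w) by (eapply tt_pos; eauto).
    assert (HQ : 0 < QQs w) by (eapply QQ_pos; eauto).
    replace (/ (QQs w * tts w)) with (- ((- / QQs w) * / tts w)) by (field; lra).
    apply (is_derive_opp (fun w => ln (tts w))).
    apply (der_comp ln tts w (/ tts w) (- / QQs w)). apply is_derive_ln; auto.
    eapply tt_deriv; eauto. }
  split.
  - assert (Phi y <= Phi z); [|lra]. apply (deriv_mono Phi (fun w => / (QQs w * tts w))); auto.
    intros w Hw. assert (0 < tts w) by (eapply tt_pos; eauto; lra). assert (0 < QQs w) by (eapply QQ_pos; eauto; lra).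
    left; apply Rinv_0_lt_compat, Rmult_lt_0_compat; auto.
  - apply (deriv_bound Phi (fun w => / (QQs w * tts w))); auto.
    intros w Hw. assert (0 < tts w) by (eapply tt_pos; eauto; lra). assert (0 < QQs w) by (eapply QQ_pos; eauto; lra).
    assert (0 < tts y2) by (eapply tt_pos; eauto; lra). assert (0 < QQs y1) by (eapply QQ_pos; eauto).
    apply Rinv_le_contravar. apply Rmult_lt_0_compat; auto.
    apply Rmult_le_compat; try lra. eapply QQ_mono; lra. eapply tt_mono; eauto; lra.
Qed.

Lemma uniform y1 y2 d : 0 < y1 -> y1 <= y2 -> 0 < d ->
  exists N, forall n, (N <= n)%nat -> forall y, y1 <= y <= y2 -> Rabs (F n y - Phi y) <= d.
Proof.
  intros Hy1 Hy12 Hd.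
  set (Lip := / (QQs y1 * tts (y2 + 1))).
  assert (HLip : 0 < Lip).
  { unfold Lip. apply Rinv_0_lt_compat, Rmult_lt_0_compat. eapply QQ_pos; eauto. eapply tt_pos; eauto; lra. }
  set (h := Rmin 1 (d / (2 * Lip))).
  assert (Hh : 0 < h) by (unfold h; apply Rmin_glb_lt; [lra| apply Rdiv_lt_0_compat; lra]).
  assert (Hh1 : h <= 1) by apply Rmin_l.
  assert (Hh2 : Lip * h <= d / 2).
  { assert (h <= d / (2 * Lip)) by apply Rmin_r. apply Rmult_le_compat_l with (r := Lip) in H; [|lra].
    replace (Lip * (d / (2 * Lip))) with (d / 2) in H by (field; lra). lra. }
  destruct (nat_above (Rmax 1 ((y2 - y1) / h))) as [J HJ].
  assert (HJ1 : (1 <= J)%nat) by (apply INR_le; simpl; assert (1 <= Rmax 1 ((y2 - y1) / h)) by apply Rmax_l; lra).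
  assert (HJ2 : y2 <= y1 + INR J * h).
  { assert ((y2 - y1) / h <= Rmax 1 ((y2 - y1) / h)) by apply Rmax_r.
    assert ((y2 - y1) / h * h <= INR J * h) by (apply Rmult_le_compat_r; lra).
    replace ((y2 - y1) / h * h) with (y2 - y1) in H0 by (field; lra). lra. }
  destruct (common_N (fun i n => (1 <= n)%nat /\ Rabs (F n (y1 + INR i * h) - Phi (y1 + INR i * h)) <= d / 2) J)
    as [N HN].
  { intros i n n' Hnn' Hall m Hm. apply Hall. lia. }
  { intros i Hi. assert (0 < y1 + INR i * h) by (pose proof (pos_INR i); nra).
    destruct (pointwise (y1 + INR i * h) (d / 2) H ltac:(lra)) as [N0 HN0].
    exists (Nat.max N0 1). intros n Hn. split; [lia|]. apply HN0. lia. }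
  exists N. intros n Hn y Hy.
  destruct (cell y1 h J y Hh HJ1 ltac:(lra)) as [i [Hi [Hl Hr]]].
  destruct (HN i ltac:(lia) n Hn) as [Hn1 Hi1].
  destruct (HN (S i) ltac:(lia) n Hn) as [_ Hi2].
  assert (Hpos : 0 < y1 + INR i * h) by (pose proof (pos_INR i); nra).
  assert (Hm1 := F_mono n (y1 + INR i * h) y Hn1 Hpos Hl).
  assert (Hm2 := F_mono n y (y1 + INR (S i) * h) Hn1 ltac:(lra) Hr).
  assert (HSi : y1 + INR (S i) * h <= y2 + 1).
  { rewrite S_INR. assert (y1 + INR i * h <= y) by lra. lra. }
  assert (L1 := Phi_lip y1 (y2 + 1) (y1 + INR i * h) y Hy1 ltac:(pose proof (pos_INR i); nra) Hl ltac:(lra)).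
  assert (L2 := Phi_lip y1 (y2 + 1) y (y1 + INR (S i) * h) Hy1 ltac:(lra) Hr HSi).
  fold Lip in L1, L2.
  assert (y - (y1 + INR i * h) <= h) by (rewrite S_INR in Hr; lra).
  assert ((y1 + INR (S i) * h) - y <= h) by (rewrite S_INR; lra).
  assert (Lip * (y - (y1 + INR i * h)) <= Lip * h) by (apply Rmult_le_compat_l; lra).
  assert (Lip * ((y1 + INR (S i) * h) - y) <= Lip * h) by (apply Rmult_le_compat_l; lra).
  apply Rabs_le_between in Hi1. apply Rabs_le_between in Hi2.
  apply Rabs_le. lra.
Qed.

End U.


Theorem lemma4p1 (a b c al0 be0 ga0 : nat)
  (Hbal : be0 = b) (HA : (0 < a)%nat) (Hal0 : (0 < al0)%nat) :
  forall M eps : R, 0 < M -> 0 < eps ->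
  exists N : nat, forall n : nat, (N <= n)%nat ->
  forall theta : R, Rabs theta <= M ->
  Rabs (/ INR n * ln (Pn a b c al0 be0 ga0 n (exp theta) / Pn a b c al0 be0 ga0 n 1)
        - ln (tau (INR a) (INR c) (INR b) 1 / tau (INR a) (INR c) (INR b) (exp theta)))
  < eps.
Proof.
  intros M eps HM Heps. subst be0.
  assert (Hy1 : 0 < exp (- M)) by apply exp_pos.
  assert (Hy12 : exp (- M) <= exp M) by (apply exp_le_mono'; lra).
  destruct (uniform a b c al0 ga0 HA Hal0 (exp (- M)) (exp M) (eps / 3) Hy1 Hy12 ltac:(lra)) as [N0 HN0].
  exists (Nat.max N0 1). intros n Hn theta Hth.
  assert (Hth' : - M <= theta <= M) by (pose proof (Rle_abs theta); pose proof (Rle_abs (- theta)); rewrite Rabs_Ropp in *; lra).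
  set (x := exp theta).
  assert (Hx : exp (- M) <= x <= exp M) by (unfold x; split; apply exp_le_mono'; lra).
  assert (Hx0 : 0 < x) by (unfold x; apply exp_pos).
  assert (H1 : exp (- M) <= 1 <= exp M).
  { rewrite <- exp_0. split; apply exp_le_mono'; lra. }
  assert (Ex := HN0 n ltac:(lia) x Hx).
  assert (E1 := HN0 n ltac:(lia) 1 H1).
  unfold F, Phi in Ex, E1.
  assert (Hgx : 0 < g a b c al0 ga0 n x) by (apply g_pos; auto).
  assert (Hg1 : 0 < g a b c al0 ga0 n 1) by (apply g_pos; auto; lra).
  assert (Htx : 0 < tt a b c x) by (eapply tt_pos; eauto).
  assert (Ht1 : 0 < tt a b c 1) by (eapply tt_pos; eauto; lra).
  assert (Hf : 0 < INR (Factorial.fact n)) by apply INR_fact_lt_0.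
  assert (Hr : Pn a b c al0 b ga0 n x / Pn a b c al0 b ga0 n 1 = g a b c al0 ga0 n x / g a b c al0 ga0 n 1).
  { unfold g, PP, P. field. split; [lra|]. fold (P a b c al0 ga0 n 1). fold (PP a b c al0 ga0 n 1).
    assert (0 < PP a b c al0 ga0 n 1) by (eapply P_pos; eauto; lra). lra. }
  rewrite Hr. fold (tt a b c 1). fold (tt a b c x).
  rewrite ln_div by auto. rewrite ln_div by auto.
  assert (Hn0 : 0 < INR n) by (apply lt_0_INR; lia).
  replace (/ INR n * (ln (g a b c al0 ga0 n x) - ln (g a b c al0 ga0 n 1)) - (ln (tt a b c 1) - ln (tt a b c x)))
    with ((ln (g a b c al0 ga0 n x) / INR n - - ln (tt a b c x)) - (ln (g a b c al0 ga0 n 1) / INR n - - ln (tt a b c 1)))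
    by (field; lra).
  eapply Rle_lt_trans; [apply Rabs_triang|]. rewrite Rabs_Ropp. lra.
Qed.
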